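(* For any values of $k$ and $\mu$, \[ \,_{2}\tilde{F}_{3}\left(\tfrac{1}{2},\tfrac{1}{2};1,1-\mu,\mu+1;-k^{2}\right)=\sum_{L=0}^{\infty}\frac{(-1)^{2L}k^{4L}\Gamma(2L+1)^{2}2^{-8L}\left(2-\delta_{L0}\right)}{(L!)^{2}} \,_{1}\tilde{F}_{2}\left(L+\tfrac{1}{2};2L+1,L+\mu+1;-\tfrac{k^{2}}{4}\right)\,_{1}\tilde{F}_{2}\left(L+\tfrac{1}{2};2L+1,L-\mu+1;-\tfrac{k^{2}}{4}\right). \]
   Context: $\,_{p}F_{q}(a_1,\dots,a_p;b_1,\dots,b_q;z)=\sum_{n\ge0}\frac{(a_1)_n\cdots(a_p)_n}{(b_1)_n\cdots(b_q)_n}\frac{z^n}{n!}$ is the generalized hypergeometric function, with $(c)_n=\Gamma(c+n)/\Gamma(c)$. The regularized hypergeometric function is $\,_{p}\tilde{F}_{q}(a_1,\dots,a_p;b_1,\dots,b_q;z)=\,_{p}F_{q}(a_1,\dots,a_p;b_1,\dots,b_q;z)/(\Gamma(b_1)\cdots\Gamma(b_q))$ (understood by continuity, as an entire function of the $b_j$, when some $b_j$ is a nonpositive integer). $\delta_{L0}$ is the Kronecker delta. *)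

(* Defs.v *)
From Stdlib Require Import Reals List Arith Factorial.
From Coquelicot Require Import Coquelicot.
Open Scope R_scope.

Definition cexp (z : C) : C :=
  (exp (fst z) * cos (snd z), exp (fst z) * sin (snd z)).

Definition npow_c (n : nat) (z : C) : C := cexp (Cmult z (RtoC (ln (INR n)))).

(* Limit of a complex sequence, componentwise (value is meaningful when the
   sequence converges). *)
Definition Clim (u : nat -> C) : C :=
  (real (Lim_seq (fun n => fst (u n))), real (Lim_seq (fun n => snd (u n)))).

Definition CSeries (a : nat -> C) : C := Clim (fun n => sum_n a n).

Fixpoint poch (c : C) (n : nat) : C :=
  match n with
  | O => RtoC 1
  | S m => Cmult (poch c m) (Cplus c (RtoC (INR m)))
  end.

(* Reciprocal Gamma function 1/Gamma(z), an entire function, via Gauss's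
   formula 1/Gamma(z) = lim_n z (z+1) ... (z+n) / (n! n^z)
   (it vanishes at z = 0, -1, -2, ...). *)
Definition rgamma (z : C) : C :=
  Clim (fun n => Cdiv (poch z (S n)) (Cmult (RtoC (INR (Factorial.fact n))) (npow_c n z))).

(* Regularized generalized hypergeometric function
   pF~q(as; bs; z) = sum_n prod_i (a_i)_n / prod_j Gamma(b_j + n) * z^n / n!,
   which equals pFq(as;bs;z)/prod_j Gamma(b_j), extended by continuity. *)
Definition hyp_reg (as_ bs : list C) (z : C) : C :=
  CSeries (fun n =>
    Cmult (Cmult (fold_right Cmult (RtoC 1) (map (fun a => poch a n) as_))
                 (fold_right Cmult (RtoC 1) (map (fun b => rgamma (Cplus b (RtoC (INR n)))) bs)))
          (Cdiv (pow_n z n) (RtoC (INR (Factorial.fact n))))).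

Definition deltaL0 (L : nat) : R := if Nat.eqb L 0 then 1 else 0.

(* Main.v *)
Require Import Defs.
From Stdlib Require Import Reals List Arith Factorial Lia Lra ZArith.
From Coquelicot Require Import Coquelicot.
Import ListNotations.
Open Scope R_scope.

Definition Ccv (u : nat -> C) (l : C) : Prop :=
  forall eps : R, 0 < eps -> exists N : nat, forall n, (N <= n)%nat -> Cmod (Cminus (u n) l) < eps.

Lemma Cmod_fst (z : C) : Rabs (fst z) <= Cmod z.
Proof. pose proof (Rmax_Cmod z). pose proof (Rmax_l (Rabs (fst z)) (Rabs (snd z))). lra. Qed.
Lemma Cmod_snd (z : C) : Rabs (snd z) <= Cmod z.
Proof. pose proof (Rmax_Cmod z). pose proof (Rmax_r (Rabs (fst z)) (Rabs (snd z))). lra. Qed.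

Lemma Cmod_sub_sym (a b : C) : Cmod (Cminus a b) = Cmod (Cminus b a).
Proof. replace (Cminus a b) with (Cmult (RtoC (-1)) (Cminus b a)) by ring.
  rewrite Cmod_mult, Cmod_R. rewrite Rabs_left by lra. ring. Qed.

Lemma Cmod_tri3 (a b c : C) : Cmod (Cminus a c) <= Cmod (Cminus a b) + Cmod (Cminus b c).
Proof. replace (Cminus a c) with (Cplus (Cminus a b) (Cminus b c)) by ring. apply Cmod_triangle. Qed.

Lemma Ccv_unique u l1 l2 : Ccv u l1 -> Ccv u l2 -> l1 = l2.
Proof.
  intros H1 H2. apply Ceq_minus. apply Cmod_eq_0.
  apply Rle_antisym; [|apply Cmod_ge_0].
  apply Rnot_lt_le. intro Hp.
  destruct (H1 (Cmod (Cminus l1 l2) / 2)) as [N1 HN1]; [lra|].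
  destruct (H2 (Cmod (Cminus l1 l2) / 2)) as [N2 HN2]; [lra|].
  specialize (HN1 (N1+N2)%nat ltac:(lia)). specialize (HN2 (N1+N2)%nat ltac:(lia)).
  pose proof (Cmod_tri3 l1 (u (N1+N2)%nat) l2) as H. rewrite (Cmod_sub_sym l1 (u (N1+N2)%nat)) in H. lra.
Qed.

Lemma Ccv_ext u v l : (exists N, forall n, (N <= n)%nat -> u n = v n) -> Ccv u l -> Ccv v l.
Proof.
  intros [N HN] Hu eps He. destruct (Hu eps He) as [M HM]. exists (N+M)%nat.
  intros n Hn. rewrite <- HN by lia. apply HM. lia.
Qed.

Lemma Ccv_const c : Ccv (fun _ => c) c.
Proof. intros eps He. exists 0%nat. intros. replace (Cminus c c) with (RtoC 0) by ring.
  rewrite Cmod_0. lra. Qed.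

Lemma Ccv_plus u v a b : Ccv u a -> Ccv v b -> Ccv (fun n => Cplus (u n) (v n)) (Cplus a b).
Proof.
  intros Hu Hv eps He. destruct (Hu (eps/2)) as [N1 H1]; [lra|]. destruct (Hv (eps/2)) as [N2 H2]; [lra|].
  exists (N1+N2)%nat. intros n Hn. specialize (H1 n ltac:(lia)). specialize (H2 n ltac:(lia)).
  replace (Cminus (Cplus (u n) (v n)) (Cplus a b)) with (Cplus (Cminus (u n) a) (Cminus (v n) b)) by ring.
  pose proof (Cmod_triangle (Cminus (u n) a) (Cminus (v n) b)). lra.
Qed.

Lemma Ccv_bounded u l : Ccv u l -> exists M, 0 <= M /\ forall n, Cmod (u n) <= M.
Proof.
  intros Hu. destruct (Hu 1 Rlt_0_1) as [N HN].
  assert (exists M, 0 <= M /\ forall n, (n <= N)%nat -> Cmod (u n) <= M) as [M [HM0 HM]].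
  { clear HN. induction N as [|N IH].
    - exists (Cmod (u 0%nat)). split; [apply Cmod_ge_0|]. intros n Hn. replace n with 0%nat by lia. lra.
    - destruct IH as [M [HM0 HM]].
      exists (M + Cmod (u (S N))). split. pose proof (Cmod_ge_0 (u (S N))). lra.
      intros n Hn. destruct (Nat.eq_dec n (S N)). subst. pose proof (Cmod_ge_0 (u (S N))). lra.
      pose proof (HM n ltac:(lia)). pose proof (Cmod_ge_0 (u (S N))). lra. }
  exists (M + Cmod l + 1). split. pose proof (Cmod_ge_0 l). lra.
  intros n. destruct (le_lt_dec n N). pose proof (HM n l0). pose proof (Cmod_ge_0 l). lra.
  specialize (HN n ltac:(lia)). replace (u n) with (Cplus (Cminus (u n) l) l) by ring.
  pose proof (Cmod_triangle (Cminus (u n) l) l). lra.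
Qed.

Lemma Ccv_mult u v a b : Ccv u a -> Ccv v b -> Ccv (fun n => Cmult (u n) (v n)) (Cmult a b).
Proof.
  intros Hu Hv. destruct (Ccv_bounded u a Hu) as [M [HM0 HM]].
  intros eps He.
  set (e1 := eps / (2 * (Cmod b + 1))). set (e2 := eps / (2 * (M + 1))).
  assert (Hb := Cmod_ge_0 b).
  destruct (Hu e1) as [N1 H1]. { unfold e1. apply Rdiv_lt_0_compat; lra. }
  destruct (Hv e2) as [N2 H2]. { unfold e2. apply Rdiv_lt_0_compat; lra. }
  exists (N1+N2)%nat. intros n Hn. specialize (H1 n ltac:(lia)). specialize (H2 n ltac:(lia)).
  replace (Cminus (Cmult (u n) (v n)) (Cmult a b)) with
    (Cplus (Cmult (u n) (Cminus (v n) b)) (Cmult (Cminus (u n) a) b)) by ring.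
  eapply Rle_lt_trans. apply Cmod_triangle. rewrite !Cmod_mult.
  assert (Cmod (u n) * Cmod (Cminus (v n) b) <= M * e2).
  { apply Rmult_le_compat; try apply Cmod_ge_0; auto. lra. }
  assert (Cmod (Cminus (u n) a) * Cmod b <= e1 * Cmod b).
  { apply Rmult_le_compat_r; auto. lra. }
  assert (M * e2 < eps / 2). { unfold e2. apply (Rmult_lt_reg_r (2*(M+1))). lra.
    field_simplify; lra. }
  assert (e1 * Cmod b < eps / 2). { unfold e1. apply (Rmult_lt_reg_r (2*(Cmod b+1))). lra.
    field_simplify; lra. }
  lra.
Qed.

Lemma Ccv_scal c u a : Ccv u a -> Ccv (fun n => Cmult c (u n)) (Cmult c a).
Proof. intros. apply (Ccv_mult (fun _ => c)); auto. apply Ccv_const. Qed.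

Lemma Ccv_squeeze u l (e : nat -> R) :
  (forall eps, 0 < eps -> exists N, forall n, (N <= n)%nat -> e n < eps) ->
  (exists N, forall n, (N <= n)%nat -> Cmod (Cminus (u n) l) <= e n) -> Ccv u l.
Proof.
  intros He [N HN] eps Heps. destruct (He eps Heps) as [M HM]. exists (N+M)%nat.
  intros n Hn. specialize (HN n ltac:(lia)). specialize (HM n ltac:(lia)). lra.
Qed.

Lemma Ccv_Clim u l : Ccv u l -> Clim u = l.
Proof.
  intros H. unfold Clim.
  assert (H1 : is_lim_seq (fun n => fst (u n)) (fst l)).
  { apply is_lim_seq_spec. intros eps. destruct (H eps (cond_pos eps)) as [N HN].
    exists N. intros n Hn. specialize (HN n Hn). eapply Rle_lt_trans; [|exact HN].
    replace (fst (u n) - fst l) with (fst (Cminus (u n) l)) by (simpl; ring). apply Cmod_fst. }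
  assert (H2 : is_lim_seq (fun n => snd (u n)) (snd l)).
  { apply is_lim_seq_spec. intros eps. destruct (H eps (cond_pos eps)) as [N HN].
    exists N. intros n Hn. specialize (HN n Hn). eapply Rle_lt_trans; [|exact HN].
    replace (snd (u n) - snd l) with (snd (Cminus (u n) l)) by (simpl; ring). apply Cmod_snd. }
  rewrite (is_lim_seq_unique _ _ H1), (is_lim_seq_unique _ _ H2). simpl. destruct l; reflexivity.
Qed.

Lemma Ccv_is_series (a : nat -> C) l : Ccv (fun n => sum_n a n) l -> is_series a l.
Proof.
  intros H. unfold is_series. apply (proj2 (filterlim_locally_ball_norm (K:=C_AbsRing) (U:=C_NormedModule) _ _)). intros eps.
  destruct (H eps (cond_pos eps)) as [N HN]. exists N. intros n Hn. apply HN. auto.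
Qed.

Lemma is_series_Ccv (a : nat -> C) l : is_series a l -> Ccv (fun n => sum_n a n) l.
Proof.
  intros H eps He. unfold is_series in H. pose proof (proj1 (filterlim_locally_ball_norm (K:=C_AbsRing) (U:=C_NormedModule) _ _) H) as H'. clear H. rename H' into H.
  destruct (H (mkposreal eps He)) as [N HN]. exists N. intros n Hn. apply HN. auto.
Qed.

Lemma Cseries_dom (a : nat -> C) (b : nat -> R) :
  (forall n, Cmod (a n) <= b n) -> ex_series b -> exists l, Ccv (fun n => sum_n a n) l.
Proof.
  intros Hab Hb. assert (ex_series a) as [l Hl].
  { apply (ex_series_le a b); auto. }
  exists l. apply is_series_Ccv. auto.
Qed.

Fixpoint csum (f : nat -> C) (n : nat) : C :=
  match n with O => RtoC 0 | S m => Cplus (csum f m) (f m) end.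
Fixpoint rsum (f : nat -> R) (n : nat) : R :=
  match n with O => 0 | S m => rsum f m + f m end.

Lemma sum_n_csum (a : nat -> C) n : sum_n a n = csum a (S n).
Proof. induction n. simpl. rewrite sum_O. ring. rewrite sum_Sn, IHn. reflexivity. Qed.

Lemma csum_ext f g n : (forall i, (i < n)%nat -> f i = g i) -> csum f n = csum g n.
Proof. induction n; intros H; simpl; auto. rewrite IHn by (intros; apply H; lia). rewrite H by lia. auto. Qed.
Lemma rsum_ext f g n : (forall i, (i < n)%nat -> f i = g i) -> rsum f n = rsum g n.
Proof. induction n; intros H; simpl; auto. rewrite IHn by (intros; apply H; lia). rewrite H by lia. auto. Qed.

Lemma csum_plus f g n : csum (fun i => Cplus (f i) (g i)) n = Cplus (csum f n) (csum g n).
Proof. induction n; simpl. ring. rewrite IHn. ring. Qed.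
Lemma csum_minus f g n : csum (fun i => Cminus (f i) (g i)) n = Cminus (csum f n) (csum g n).
Proof. induction n; simpl. ring. rewrite IHn. ring. Qed.
Lemma csum_scal c f n : csum (fun i => Cmult c (f i)) n = Cmult c (csum f n).
Proof. induction n; simpl. ring. rewrite IHn. ring. Qed.
Lemma csum_zero n : csum (fun _ => RtoC 0) n = RtoC 0.
Proof. induction n; simpl; auto. rewrite IHn. ring. Qed.
Lemma rsum_plus f g n : rsum (fun i => f i + g i) n = rsum f n + rsum g n.
Proof. induction n; simpl. ring. rewrite IHn. ring. Qed.
Lemma rsum_scal c f n : rsum (fun i => c * f i) n = c * rsum f n.
Proof. induction n; simpl. ring. rewrite IHn. ring. Qed.
Lemma rsum_le f g n : (forall i, (i < n)%nat -> f i <= g i) -> rsum f n <= rsum g n.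
Proof. induction n; intros H; simpl. lra. pose proof (H n ltac:(lia)). pose proof (IHn ltac:(intros; apply H; lia)). lra. Qed.
Lemma rsum_nonneg f n : (forall i, (i < n)%nat -> 0 <= f i) -> 0 <= rsum f n.
Proof. intros H. replace 0 with (rsum (fun _ => 0) n). apply rsum_le; auto. induction n; simpl; auto. rewrite IHn. ring. intros; apply H; lia. Qed.
Lemma rsum_mono f n m : (forall i, 0 <= f i) -> (n <= m)%nat -> rsum f n <= rsum f m.
Proof. intros H Hnm. induction Hnm. lra. simpl. pose proof (H m). lra. Qed.
Lemma Cmod_csum f n : Cmod (csum f n) <= rsum (fun i => Cmod (f i)) n.
Proof. induction n; simpl. rewrite Cmod_0. lra. eapply Rle_trans. apply Cmod_triangle. lra. Qed.
Lemma csum_RtoC f n : csum (fun i => RtoC (f i)) n = RtoC (rsum f n).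
Proof. induction n; simpl; auto. rewrite IHn, RtoC_plus. auto. Qed.

Lemma csum_swap (f : nat -> nat -> C) n m :
  csum (fun i => csum (fun j => f i j) m) n = csum (fun j => csum (fun i => f i j) n) m.
Proof.
  induction n; simpl. rewrite csum_zero. auto.
  rewrite IHn. rewrite <- csum_plus. auto.
Qed.
Lemma rsum_swap (f : nat -> nat -> R) n m :
  rsum (fun i => rsum (fun j => f i j) m) n = rsum (fun j => rsum (fun i => f i j) n) m.
Proof.
  induction n; simpl. induction m; simpl; auto. rewrite <- IHm. ring.
  rewrite IHn. rewrite <- rsum_plus. auto.
Qed.

Lemma csum_mult f g n m : Cmult (csum f n) (csum g m) = csum (fun i => csum (fun j => Cmult (f i) (g j)) m) n.
Proof.
  induction n; simpl. ring. rewrite <- IHn. rewrite csum_scal. ring.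
Qed.
Lemma rsum_mult f g n m : rsum f n * rsum g m = rsum (fun i => rsum (fun j => f i * g j) m) n.
Proof.
  induction n; simpl. ring. rewrite <- IHn. rewrite rsum_scal. ring.
Qed.

Lemma csum_delta (f : nat -> C) n j : (j < n)%nat ->
  csum (fun i => if Nat.eqb i j then f i else RtoC 0) n = f j.
Proof.
  induction n; intros H. lia. simpl. destruct (Nat.eq_dec j n).
  - subst. rewrite Nat.eqb_refl. rewrite (csum_ext _ (fun _ => RtoC 0)). rewrite csum_zero. ring.
    intros i Hi. destruct (Nat.eqb_spec i n). lia. auto.
  - destruct (Nat.eqb_spec n j). lia. rewrite IHn by lia. ring.
Qed.

Lemma csum_split f n m : csum f (n + m) = Cplus (csum f n) (csum (fun i => f (n + i)%nat) m).
Proof. induction m; simpl. rewrite Nat.add_0_r. ring. rewrite Nat.add_succ_r. simpl. rewrite IHm. ring. Qed.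

Lemma csum_first f n : csum f (S n) = Cplus (f 0%nat) (csum (fun i => f (S i)) n).
Proof. replace (S n) with (1 + n)%nat by lia. rewrite csum_split. simpl. ring. Qed.

Lemma csum_rev f n : csum f n = csum (fun i => f (n - 1 - i)%nat) n.
Proof.
  revert f. induction n; intros f. auto. rewrite csum_first. rewrite IHn. simpl.
  replace (n - 0 - n)%nat with 0%nat by lia. rewrite Cplus_comm. f_equal.
  apply csum_ext. intros. f_equal. lia.
Qed.

Lemma csum_extend f n m : (n <= m)%nat -> (forall i, (n <= i)%nat -> f i = RtoC 0) -> csum f m = csum f n.
Proof. intros H Hf. induction H. auto. simpl. rewrite IHle, Hf by lia. ring. Qed.

Lemma rsum_exp y n : 0 <= y -> rsum (fun i => y ^ i / INR (fact i)) n <= exp y.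
Proof.
  intros Hy. destruct n. simpl. pose proof (exp_pos y). lra.
  replace (rsum (fun i => y ^ i / INR (fact i)) (S n)) with (sum_f_R0 (fun k => y ^ k / INR (fact k)) n).
  apply exp_ge_taylor; auto. induction n; simpl; auto. ring. rewrite IHn. simpl. auto.
Qed.

Lemma pow_n_Cpow (z : C) n : pow_n z n = Cpow z n.
Proof. induction n; simpl; auto. Qed.

Lemma Ceq (a b : C) : fst a = fst b -> snd a = snd b -> a = b.
Proof. destruct a, b; simpl; intros; subst; auto. Qed.

Lemma Cmod_le_sum (z : C) : Cmod z <= Rabs (fst z) + Rabs (snd z).
Proof.
  unfold Cmod. rewrite <- (sqrt_pow2 (Rabs (fst z) + Rabs (snd z))).
  apply sqrt_le_1_alt. rewrite <- (pow2_abs (fst z)), <- (pow2_abs (snd z)).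
  pose proof (Rabs_pos (fst z)). pose proof (Rabs_pos (snd z)). nra.
  pose proof (Rabs_pos (fst z)). pose proof (Rabs_pos (snd z)). lra.
Qed.

Lemma Cmod_sq (z : C) : Cmod z ^ 2 = fst z ^ 2 + snd z ^ 2.
Proof. unfold Cmod. rewrite pow2_sqrt. auto. nra. Qed.

Lemma Ccauchy (u : nat -> C) :
  (forall eps, 0 < eps -> exists N, forall n m, (N <= n)%nat -> (N <= m)%nat -> Cmod (Cminus (u n) (u m)) < eps) ->
  exists l, Ccv u l.
Proof.
  intros H.
  assert (Hx : ex_finite_lim_seq (fun n => fst (u n))).
  { apply ex_lim_seq_cauchy_corr. intros eps. destruct (H eps (cond_pos eps)) as [N HN].
    exists N. intros n m Hn Hm. specialize (HN n m Hn Hm). eapply Rle_lt_trans; [|exact HN].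
    replace (fst (u n) - fst (u m)) with (fst (Cminus (u n) (u m))) by (simpl; ring). apply Cmod_fst. }
  assert (Hy : ex_finite_lim_seq (fun n => snd (u n))).
  { apply ex_lim_seq_cauchy_corr. intros eps. destruct (H eps (cond_pos eps)) as [N HN].
    exists N. intros n m Hn Hm. specialize (HN n m Hn Hm). eapply Rle_lt_trans; [|exact HN].
    replace (snd (u n) - snd (u m)) with (snd (Cminus (u n) (u m))) by (simpl; ring). apply Cmod_snd. }
  destruct Hx as [lx Hx]. destruct Hy as [ly Hy]. exists (lx, ly).
  intros eps He. apply is_lim_seq_spec in Hx. apply is_lim_seq_spec in Hy.
  destruct (Hx (mkposreal (eps/2) ltac:(lra))) as [N1 H1].
  destruct (Hy (mkposreal (eps/2) ltac:(lra))) as [N2 H2].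
  exists (N1 + N2)%nat. intros n Hn. specialize (H1 n ltac:(lia)). specialize (H2 n ltac:(lia)).
  simpl in H1, H2. eapply Rle_lt_trans. apply Cmod_le_sum. simpl. unfold Rminus in *. lra.
Qed.

Lemma nat_above (x : R) : exists n : nat, x < INR n.
Proof.
  destruct (archimed (Rabs x)) as [H1 H2]. exists (Z.to_nat (up (Rabs x))).
  rewrite INR_IZR_INZ. rewrite Z2Nat.id.
  pose proof (Rle_abs x). lra. apply le_IZR. pose proof (Rabs_pos x). lra.
Qed.

Lemma inv_small (c : R) : forall eps, 0 < eps -> exists N, forall n, (N <= n)%nat -> c / (INR n + 1) < eps.
Proof.
  intros eps He. destruct (nat_above (c / eps)) as [N HN]. exists N. intros n Hn.
  apply le_INR in Hn. assert (0 < INR n + 1) by (pose proof (pos_INR n); lra).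
  apply (Rmult_lt_reg_r (INR n + 1)); auto. unfold Rdiv. rewrite Rmult_assoc, Rinv_l by lra.
  assert (c / eps * eps = c) by (field; lra). nra.
Qed.

Lemma cexp_add u v : cexp (Cplus u v) = Cmult (cexp u) (cexp v).
Proof. destruct u as [a b], v as [c d]. unfold cexp. apply Ceq; simpl; rewrite exp_plus.
  rewrite cos_plus. ring. rewrite sin_plus. ring. Qed.
Lemma cexp_0 : cexp (RtoC 0) = RtoC 1.
Proof. unfold cexp. apply Ceq; simpl; rewrite exp_0. rewrite cos_0. ring. rewrite sin_0. ring. Qed.
Lemma cexp_real r : cexp (RtoC r) = RtoC (exp r).
Proof. unfold cexp. apply Ceq; simpl. rewrite cos_0. ring. rewrite sin_0. ring. Qed.
Lemma cexp_opp u : Cmult (cexp u) (cexp (Copp u)) = RtoC 1.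
Proof. rewrite <- cexp_add. replace (Cplus u (Copp u)) with (RtoC 0) by ring. apply cexp_0. Qed.
Lemma cexp_nz u : cexp u <> RtoC 0.
Proof. intros H. pose proof (cexp_opp u) as H1. rewrite H, Cmult_0_l in H1.
  apply C1_nz. auto. Qed.
Lemma Cmod_cexp u : Cmod (cexp u) = exp (fst u).
Proof. unfold Cmod, cexp. cbn [fst snd]. pose proof (sin2_cos2 (snd u)) as H. unfold Rsqr in H.
  replace ((exp (fst u) * cos (snd u)) ^ 2 + (exp (fst u) * sin (snd u)) ^ 2)
  with (exp (fst u) ^ 2) by (rewrite <- (Rmult_1_r (exp (fst u) ^ 2)), <- H; ring).
  apply sqrt_pow2. pose proof (exp_pos (fst u)); lra. Qed.

Lemma sin_near0 b : 0 <= b <= 1 -> b - b^3/6 <= sin b.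
Proof. intros Hb. destruct (pre_sin_bound b 0) as [t _]; try lra. revert t.
  unfold sin_approx, sin_term; simpl; intros t. eapply Rle_trans; [|exact t]. right. field. Qed.
Lemma cos_near0 b : -1 <= b <= 1 -> 1 - b^2/2 <= cos b.
Proof. intros Hb. destruct (pre_cos_bound b 0) as [t _]; try lra. revert t.
  unfold cos_approx, cos_term; simpl; intros t. eapply Rle_trans; [|exact t]. right. field. Qed.

Lemma sin_bounds b : Rabs b <= 1 -> Rabs (sin b) <= Rabs b /\ Rabs (sin b - b) <= b ^ 2.
Proof.
  intros Hb. destruct (Rle_or_lt 0 b).
  - rewrite Rabs_pos_eq in Hb by lra. pose proof (sin_near0 b ltac:(lra)).
    assert (sin b <= b). { destruct (Req_dec b 0). subst. rewrite sin_0. lra. left. apply sin_lt_x. lra. }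
    assert (b^3/6 <= b^2) by nra.
    split. rewrite !Rabs_pos_eq; nra. rewrite Rabs_left1; nra.
  - rewrite Rabs_left in Hb by lra. pose proof (sin_near0 (-b) ltac:(lra)). rewrite sin_neg in H0.
    assert (sin (-b) <= -b). { left. apply sin_lt_x. lra. } rewrite sin_neg in H1.
    assert ((-b)^3/6 <= b^2) by nra.
    split. rewrite (Rabs_left b), Rabs_left1; nra. rewrite Rabs_pos_eq; nra.
Qed.

Lemma exp_bounds a : Rabs a <= 1/2 -> 1 + a <= exp a <= 1 + a + 2 * a ^ 2.
Proof.
  intros Ha. split. apply exp_ineq1_le.
  pose proof (exp_ineq1_le (-a)). assert (exp a * exp (-a) = 1) by (rewrite <- exp_plus; replace (a + - a) with 0 by ring; apply exp_0).
  pose proof (exp_pos a). apply Rabs_le_between in Ha. 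
  assert (exp a * (1 - a) <= 1) by nra. nra.
Qed.

Lemma cexp_bound w : Cmod w <= 1/2 -> Cmod (Cminus (Cminus (cexp w) (RtoC 1)) w) <= 4 * Cmod w ^ 2.
Proof.
  intros Hw. destruct w as [a b]. pose proof (Cmod_fst (a,b)) as Ha. pose proof (Cmod_snd (a,b)) as Hb.
  simpl in Ha, Hb. pose proof (Cmod_sq (a,b)) as Hs. simpl in Hs. set (r := Cmod (a,b)) in *.
  pose proof (exp_bounds a ltac:(lra)) as [E1 E2].
  pose proof (cos_near0 b) as C1. pose proof (COS_bound b) as [_ C2].
  pose proof (sin_bounds b ltac:(lra)) as [S1 S2].
  eapply Rle_trans. apply Cmod_le_sum. unfold cexp. simpl.
  replace (exp a * cos b - 1 - a) with (exp a * cos b - 1 - a) by ring.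
  assert (A1 : Rabs (exp a * cos b - 1 - a) <= 2 * r ^ 2).
  { apply Rabs_le_between in Ha. apply Rabs_le_between in Hb. specialize (C1 ltac:(lra)).
    assert (exp a <= 2) by nra. apply Rabs_le. split; nra. }
  assert (A2 : Rabs (exp a * sin b - b) <= 2 * r ^ 2).
  { replace (exp a * sin b - b) with ((exp a - 1) * sin b + (sin b - b)) by ring.
    eapply Rle_trans. apply Rabs_triang. rewrite Rabs_mult.
    assert (Rabs (exp a - 1) <= 2 * Rabs a).
    { apply Rabs_le_between in Ha. apply Rabs_le. destruct (Rle_or_lt 0 a).
      rewrite Rabs_pos_eq by lra. nra. rewrite Rabs_left by lra. nra. }
    assert (Rabs (exp a - 1) * Rabs (sin b) <= 2 * Rabs a * Rabs b).
    { apply Rmult_le_compat; auto using Rabs_pos. }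
    assert (2 * Rabs a * Rabs b <= a^2 + b^2).
    { rewrite <- (pow2_abs a), <- (pow2_abs b). pose proof (pow2_ge_0 (Rabs a - Rabs b)). nra. }
    nra. }
  replace (exp a * cos b + - (1) + - a) with (exp a * cos b - 1 - a) by ring.
  replace (exp a * sin b + - 0 + - b) with (exp a * sin b - b) by ring.
  replace (r * (r * 1)) with (r ^ 2) by ring. lra.
Qed.

Lemma exp_le a b : a <= b -> exp a <= exp b.
Proof. intros [H|H]. left. apply exp_increasing; auto. subst. lra. Qed.

Lemma poch_S c n : poch c (S n) = Cmult (poch c n) (Cplus c (RtoC (INR n))).
Proof. reflexivity. Qed.

Lemma poch_shift c n : poch c (S n) = Cmult c (poch (Cplus c (RtoC 1)) n).
Proof.
  induction n. simpl. ring. rewrite poch_S, IHn, poch_S. rewrite S_INR, RtoC_plus. ring.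
Qed.

Lemma poch_add c n m : poch c (n + m) = Cmult (poch c n) (poch (Cplus c (RtoC (INR n))) m).
Proof.
  induction m. rewrite Nat.add_0_r. simpl. ring.
  rewrite Nat.add_succ_r, !poch_S, IHm, plus_INR, RtoC_plus. ring.
Qed.

Definition Gs (z : C) (n : nat) : C :=
  Cmult (poch z (S n)) (Cmult (RtoC (/ INR (fact n))) (cexp (Copp (Cmult z (RtoC (ln (INR n))))))).

Lemma Cinv_cexp u : cexp (Copp u) = Cinv (cexp u).
Proof.
  pose proof (cexp_opp u) as H. pose proof (cexp_nz u).
  rewrite <- (Cmult_1_l (cexp (Copp u))). rewrite <- (Cinv_l (cexp u)) by auto.
  rewrite <- Cmult_assoc, H. ring.
Qed.

Lemma INR_fact_nz n : INR (fact n) <> 0.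
Proof. apply INR_fact_neq_0. Qed.

Lemma rg_seq_eq z n : Cdiv (poch z (S n)) (Cmult (RtoC (INR (fact n))) (npow_c n z)) = Gs z n.
Proof.
  unfold Gs, npow_c. rewrite Cinv_cexp. rewrite RtoC_inv by apply INR_fact_nz.
  pose proof (cexp_nz (Cmult z (RtoC (ln (INR n))))).
  assert (RtoC (INR (fact n)) <> RtoC 0). { intro H1. apply RtoC_inj in H1. apply (INR_fact_nz n). auto. }
  field. auto.
Qed.

Definition gfac (z : C) (n : nat) : C :=
  Cmult (Cplus (RtoC 1) (Cdiv z (RtoC (INR (S n))))) (cexp (Copp (Cmult z (RtoC (ln (INR (S n)) - ln (INR n)))))).

Lemma RtoC_nz r : r <> 0 -> RtoC r <> RtoC 0.
Proof. intros H H1. apply RtoC_inj in H1. auto. Qed.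

Lemma Gs_rec z n : Gs z (S n) = Cmult (Gs z n) (gfac z n).
Proof.
  unfold Gs, gfac. rewrite (poch_S z (S n)).
  replace (Copp (Cmult z (RtoC (ln (INR (S n)))))) with
    (Cplus (Copp (Cmult z (RtoC (ln (INR n))))) (Copp (Cmult z (RtoC (ln (INR (S n)) - ln (INR n)))))).
  2:{ rewrite RtoC_minus. ring. }
  rewrite cexp_add. rewrite fact_simpl, mult_INR.
  assert (INR (S n) <> 0) by (apply not_0_INR; lia). pose proof (INR_fact_nz n).
  rewrite !RtoC_inv by (try apply Rmult_integral_contrapositive; auto).
  rewrite RtoC_mult.
  field. split; apply RtoC_nz; auto.
Qed.

Lemma ln_delta n : (1 <= n)%nat -> / INR (S n) <= ln (INR (S n)) - ln (INR n) <= / INR n.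
Proof.
  intros Hn. apply le_INR in Hn. simpl in Hn. rewrite S_INR. set (x := INR n) in *.
  assert (0 < x) by lra.
  split.
  - assert (ln (x / (x+1)) <= - / (x+1)).
    { rewrite <- (ln_exp (- / (x+1))). apply ln_le. apply Rdiv_lt_0_compat; lra.
      pose proof (exp_ineq1_le (- / (x+1))). 
      replace (x / (x+1)) with (1 + - / (x+1)) by (field; lra). lra. }
    rewrite ln_div in H0 by lra. lra.
  - assert (ln ((x+1) / x) <= / x).
    { rewrite <- (ln_exp (/ x)). apply ln_le. apply Rdiv_lt_0_compat; lra.
      pose proof (exp_ineq1_le (/ x)). replace ((x+1) / x) with (1 + / x) by (field; lra). lra. }
    rewrite ln_div in H0 by lra. lra.
Qed.

Lemma gfac_bound z n : (1 <= n)%nat -> 2 * Cmod z <= INR n ->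
  Cmod (Cminus (gfac z n) (RtoC 1)) <= (7 * Cmod z ^ 2 + Cmod z) / INR n ^ 2.
Proof.
  intros Hn Hz. unfold gfac. pose proof (ln_delta n Hn) as [D1 D2].
  set (d := ln (INR (S n)) - ln (INR n)) in *.
  assert (Hn' : 1 <= INR n) by (apply le_INR in Hn; simpl in Hn; lra).
  assert (HS : INR (S n) = INR n + 1) by apply S_INR.
  rewrite HS in D1. set (x := INR n) in *.
  set (w := Copp (Cmult z (RtoC d))).
  assert (Hd0 : 0 <= d). { assert (0 < / (x+1)) by (apply Rinv_0_lt_compat; lra). lra. }
  assert (Hw : Cmod w = Cmod z * d).
  { unfold w. replace (Copp (Cmult z (RtoC d))) with (Cmult (RtoC (-1)) (Cmult z (RtoC d))) by ring.
    rewrite !Cmod_mult, !Cmod_R. rewrite Rabs_left by lra. rewrite Rabs_pos_eq by lra. ring. }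
  assert (Hz0 := Cmod_ge_0 z).
  assert (Hwx : Cmod w <= Cmod z / x).
  { rewrite Hw. unfold Rdiv. apply Rmult_le_compat_l; auto. }
  assert (Hw2 : Cmod w <= 1/2).
  { eapply Rle_trans. apply Hwx. apply (Rmult_le_reg_r x). lra. unfold Rdiv. rewrite Rmult_assoc, Rinv_l by lra. lra. }
  pose proof (cexp_bound w Hw2) as HE.
  fold w. rewrite HS. set (E := cexp w) in *.
  replace (Cminus (Cmult (Cplus (RtoC 1) (Cdiv z (RtoC (x + 1)))) E) (RtoC 1)) with
    (Cplus (Cplus (Cminus (Cminus E (RtoC 1)) w) (Cmult z (RtoC (/(x+1) - d))))
           (Cmult (Cmult z (RtoC (/(x+1)))) (Cminus E (RtoC 1)))).
  2:{ unfold w. rewrite RtoC_minus. rewrite RtoC_inv by lra. field. apply RtoC_nz. lra. }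
  eapply Rle_trans. apply Cmod_triangle. eapply Rle_trans. apply Rplus_le_compat_r. apply Cmod_triangle.
  rewrite !Cmod_mult, !Cmod_R.
  assert (T1 : 4 * Cmod w ^ 2 <= 4 * (Cmod z ^ 2 / x ^ 2)).
  { apply Rmult_le_compat_l. lra. replace (Cmod z ^ 2 / x ^ 2) with ((Cmod z / x)^2) by (field; lra).
    apply pow_incr. split; auto. apply Cmod_ge_0. }
  assert (T2 : Rabs (/ (x + 1) - d) <= / x ^ 2).
  { rewrite Rabs_left1 by lra. assert (/ x - / (x+1) <= / x ^ 2).
    { replace (/ x - / (x+1)) with (/ (x * (x+1))) by (field; lra). apply Rinv_le_contravar. nra. nra. }
    lra. }
  assert (T3 : Cmod (Cminus E (RtoC 1)) <= 3 * Cmod w).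
  { replace (Cminus E (RtoC 1)) with (Cplus (Cminus (Cminus E (RtoC 1)) w) w) by ring.
    eapply Rle_trans. apply Cmod_triangle. assert (Cmod w ^ 2 <= Cmod w / 2).
    { pose proof (Cmod_ge_0 w). nra. } lra. }
  assert (T4 : Rabs (/ (x+1)) <= / x).
  { rewrite Rabs_pos_eq. apply Rinv_le_contravar; lra. left. apply Rinv_0_lt_compat. lra. }
  assert (Cmod z * Rabs (/ (x + 1) - d) <= Cmod z / x ^ 2).
  { unfold Rdiv. apply Rmult_le_compat_l; auto. }
  assert (Cmod z * Rabs (/ (x + 1)) * Cmod (Cminus E (RtoC 1)) <= (Cmod z / x) * (3 * (Cmod z / x))).
  { apply Rmult_le_compat. apply Rmult_le_pos; auto; apply Rabs_pos. apply Cmod_ge_0.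
    unfold Rdiv. apply Rmult_le_compat_l; auto. lra. }
  replace ((Cmod z / x) * (3 * (Cmod z / x))) with (3 * (Cmod z ^ 2 / x ^ 2)) in H0 by (field; lra).
  replace ((7 * Cmod z ^ 2 + Cmod z) / x ^ 2) with (7 * (Cmod z ^ 2 / x ^ 2) + Cmod z / x ^ 2) by (field; lra).
  lra.
Qed.

Lemma prod_conv (G g : nat -> C) (K : R) (n0 : nat) : (1 <= n0)%nat -> 0 <= K ->
  (forall n, (n0 <= n)%nat -> G (S n) = Cmult (G n) (g n)) ->
  (forall n, (n0 <= n)%nat -> Cmod (Cminus (g n) (RtoC 1)) <= K / INR n ^ 2) ->
  exists l, Ccv G l.
Proof.
  intros Hn0 HK HG Hg.
  assert (Hsq : forall n, (1 <= n)%nat -> / INR n ^ 2 <= 2 * (/ INR n - / INR (S n))).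
  { intros n Hn. apply le_INR in Hn. simpl in Hn. rewrite S_INR.
    replace (2 * (/ INR n - / (INR n + 1))) with (2 / (INR n * (INR n + 1))) by (field; lra).
    replace (/ INR n ^ 2) with (1 / (INR n * INR n)) by (field; lra).
    apply Rmult_le_reg_r with (INR n * INR n * (INR n + 1)). nra.
    field_simplify; try lra. }
  assert (HB : forall d, Cmod (G (n0 + d)%nat) <= Cmod (G n0) * exp (2 * K * (/ INR n0 - / INR (n0 + d)))).
  { induction d.
    - rewrite Nat.add_0_r. replace (/ INR n0 - / INR n0) with 0 by ring. rewrite Rmult_0_r, exp_0. lra.
    - rewrite Nat.add_succ_r, HG by lia. rewrite Cmod_mult.
      set (n := (n0 + d)%nat) in *.
      assert (Cmod (g n) <= exp (K / INR n ^ 2)).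
      { replace (g n) with (Cplus (Cminus (g n) (RtoC 1)) (RtoC 1)) by ring.
        eapply Rle_trans. apply Cmod_triangle. rewrite Cmod_R, Rabs_R1.
        pose proof (exp_ineq1_le (K / INR n ^ 2)). specialize (Hg n ltac:(unfold n; lia)). lra. }
      assert (K / INR n ^ 2 <= 2 * K * (/ INR n - / INR (S n))).
      { unfold Rdiv. specialize (Hsq n ltac:(unfold n; lia)). nra. }
      eapply Rle_trans. apply Rmult_le_compat; try apply Cmod_ge_0. exact IHd. exact H.
      rewrite Rmult_assoc, <- exp_plus. apply Rmult_le_compat_l. apply Cmod_ge_0.
      apply exp_le. lra. }
  set (B := Cmod (G n0) * exp (2 * K)).
  assert (HB' : forall n, (n0 <= n)%nat -> Cmod (G n) <= B).
  { intros n Hn. replace n with (n0 + (n - n0))%nat by lia. eapply Rle_trans. apply HB.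
    apply Rmult_le_compat_l. apply Cmod_ge_0. apply exp_le.
    assert (0 < / INR (n0 + (n - n0))). { apply Rinv_0_lt_compat. apply lt_0_INR. lia. }
    assert (/ INR n0 <= 1). { apply le_INR in Hn0. simpl in Hn0. rewrite <- Rinv_1. apply Rinv_le_contravar; lra. }
    nra. }
  assert (HD : forall d m, (n0 <= m)%nat -> Cmod (Cminus (G (m + d)%nat) (G m)) <= 2 * B * K * (/ INR m - / INR (m + d))).
  { intros d m Hm. induction d.
    - rewrite Nat.add_0_r. replace (Cminus (G m) (G m)) with (RtoC 0) by ring. rewrite Cmod_0. lra.
    - rewrite Nat.add_succ_r. eapply Rle_trans. apply (Cmod_tri3 _ (G (m + d)%nat)).
      rewrite HG by lia.
      replace (Cminus (Cmult (G (m + d)%nat) (g (m + d)%nat)) (G (m + d)%nat)) with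
        (Cmult (G (m + d)%nat) (Cminus (g (m + d)%nat) (RtoC 1))) by ring.
      rewrite Cmod_mult.
      assert (Cmod (G (m + d)%nat) * Cmod (Cminus (g (m + d)%nat) (RtoC 1)) <= B * (K / INR (m+d) ^ 2)).
      { apply Rmult_le_compat; try apply Cmod_ge_0. apply HB'. lia. apply Hg. lia. }
      assert (B * (K / INR (m+d) ^ 2) <= 2 * B * K * (/ INR (m + d) - / INR (S (m + d)))).
      { assert (0 <= B) by (unfold B; pose proof (Cmod_ge_0 (G n0)); pose proof (exp_pos (2*K)); nra).
        specialize (Hsq (m + d)%nat ltac:(lia)). unfold Rdiv. 
        replace (2 * B * K * (/ INR (m + d) - / INR (S (m + d)))) with (B * K * (2 * (/ INR (m + d) - / INR (S (m + d))))) by ring.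
        rewrite <- Rmult_assoc. apply Rmult_le_compat_l. nra. lra. }
      lra. }
  apply Ccauchy. intros eps He.
  assert (HB0 : 0 <= B) by (unfold B; pose proof (Cmod_ge_0 (G n0)); pose proof (exp_pos (2*K)); nra).
  destruct (inv_small (4 * B * K) eps He) as [N HN].
  exists (N + n0)%nat. intros n m Hn Hm.
  assert (Hgen : forall a b, (N + n0 <= a)%nat -> (a <= b)%nat -> Cmod (Cminus (G b) (G a)) < eps).
  { intros a b Ha Hab. replace b with (a + (b - a))%nat by lia. eapply Rle_lt_trans. apply HD. lia.
    assert (0 < / INR (a + (b - a))). { apply Rinv_0_lt_compat. apply lt_0_INR. lia. }
    assert (/ INR a <= 2 / (INR a + 1)).
    { assert (1 <= INR a) by (apply le_INR in Ha; apply le_INR in Hn0; rewrite plus_INR in Ha; simpl in Hn0; pose proof (pos_INR N); lra).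
      apply Rmult_le_reg_r with (INR a * (INR a + 1)). nra. field_simplify; lra. }
    specialize (HN a ltac:(lia)).
    assert (2 * B * K * (/ INR a - / INR (a + (b - a))) <= 2 * B * K * (2 / (INR a + 1))).
    { apply Rmult_le_compat_l. nra. lra. }
    replace (2 * B * K * (2 / (INR a + 1))) with (4 * B * K / (INR a + 1)) in H1 by (field; pose proof (pos_INR a); lra).
    lra. }
  destruct (le_lt_dec m n).
  - apply Hgen; lia.
  - rewrite Cmod_sub_sym. apply Hgen; lia.
Qed.

Lemma rgamma_cv z : Ccv (Gs z) (rgamma z).
Proof.
  destruct (nat_above (2 * Cmod z)) as [n1 Hn1].
  assert (exists l, Ccv (Gs z) l) as [l Hl].
  { apply (prod_conv (Gs z) (gfac z) (7 * Cmod z ^ 2 + Cmod z) (S n1)).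
    lia. pose proof (Cmod_ge_0 z). nra.
    intros. apply Gs_rec.
    intros n Hn. apply gfac_bound. lia. apply le_INR in Hn. rewrite S_INR in Hn. lra. }
  assert (rgamma z = l).
  { unfold rgamma. apply Ccv_Clim. apply (Ccv_ext (Gs z)). exists 0%nat. intros. symmetry. apply rg_seq_eq. auto. }
  rewrite H. auto.
Qed.

Lemma INR_nz n : (1 <= n)%nat -> INR n <> 0.
Proof. intros. apply not_0_INR. lia. Qed.

Lemma ratio_cv z : Ccv (fun n => Cdiv (Cplus z (RtoC (INR (S n)))) (RtoC (INR n))) (RtoC 1).
Proof.
  apply (Ccv_squeeze _ _ (fun n => 2 * Cmod (Cplus z (RtoC 1)) / (INR n + 1))).
  apply inv_small. exists 1%nat. intros n Hn.
  assert (Hn' : 1 <= INR n) by (apply le_INR in Hn; simpl in Hn; lra).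
  replace (Cminus (Cdiv (Cplus z (RtoC (INR (S n)))) (RtoC (INR n))) (RtoC 1))
    with (Cdiv (Cplus z (RtoC 1)) (RtoC (INR n))).
  2:{ rewrite S_INR, RtoC_plus. field. apply RtoC_nz. lra. }
  rewrite Cmod_div by (apply RtoC_nz; lra). rewrite Cmod_R, Rabs_pos_eq by lra.
  pose proof (Cmod_ge_0 (Cplus z (RtoC 1))).
  apply Rmult_le_reg_r with (INR n * (INR n + 1)). nra. field_simplify; try lra. nra.
Qed.

Lemma cexp_mlnn n : (1 <= n)%nat -> cexp (RtoC (- ln (INR n))) = RtoC (/ INR n).
Proof. intros. rewrite cexp_real, exp_Ropp, exp_ln. auto. apply lt_0_INR. lia. Qed.

Lemma Gs_shift z n : (1 <= n)%nat ->
  Cmult (Gs z n) (Cdiv (Cplus z (RtoC (INR (S n)))) (RtoC (INR n))) = Cmult z (Gs (Cplus z (RtoC 1)) n).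
Proof.
  intros Hn. unfold Gs.
  assert (Hp : Cmult (poch z (S n)) (Cplus z (RtoC (INR (S n)))) = Cmult z (poch (Cplus z (RtoC 1)) (S n))).
  { rewrite <- poch_shift. reflexivity. }
  replace (Copp (Cmult (Cplus z (RtoC 1)) (RtoC (ln (INR n))))) with
    (Cplus (Copp (Cmult z (RtoC (ln (INR n))))) (RtoC (- ln (INR n)))) by (rewrite RtoC_opp; ring).
  rewrite cexp_add, cexp_mlnn by auto.
  set (P := poch (Cplus z (RtoC 1)) (S n)) in *.
  replace (Cmult z (Cmult P (Cmult (RtoC (/ INR (fact n))) (Cmult (cexp (Copp (Cmult z (RtoC (ln (INR n)))))) (RtoC (/ INR n))))))
    with (Cmult (Cmult z P) (Cmult (RtoC (/ INR (fact n))) (Cmult (cexp (Copp (Cmult z (RtoC (ln (INR n)))))) (RtoC (/ INR n))))) by ring.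
  rewrite <- Hp. rewrite !RtoC_inv by (apply INR_fact_nz || (apply INR_nz; auto)). field. split; apply RtoC_nz. apply INR_nz; auto. apply INR_fact_nz.
Qed.

Lemma rgamma_rec z : rgamma z = Cmult z (rgamma (Cplus z (RtoC 1))).
Proof.
  pose proof (Ccv_mult _ _ _ _ (rgamma_cv z) (ratio_cv z)) as H1.
  pose proof (Ccv_scal z _ _ (rgamma_cv (Cplus z (RtoC 1)))) as H2.
  assert (H3 : Ccv (fun n => Cmult z (Gs (Cplus z (RtoC 1)) n)) (Cmult (rgamma z) (RtoC 1))).
  { eapply Ccv_ext; [|exact H1]. exists 1%nat. intros. apply Gs_shift. auto. }
  pose proof (Ccv_unique _ _ _ H2 H3) as E. rewrite E. ring.
Qed.

Lemma poch_one m : poch (RtoC 1) m = RtoC (INR (fact m)).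
Proof. induction m. reflexivity. rewrite poch_S, IHm, fact_simpl, mult_INR, S_INR, !RtoC_mult, RtoC_plus. ring. Qed.

Lemma rgamma_one : rgamma (RtoC 1) = RtoC 1.
Proof.
  pose proof (ratio_cv (RtoC 0)) as H.
  assert (H2 : Ccv (Gs (RtoC 1)) (RtoC 1)).
  { eapply Ccv_ext; [|exact H]. exists 1%nat. intros n Hn. unfold Gs.
    rewrite poch_one. replace (Copp (Cmult (RtoC 1) (RtoC (ln (INR n))))) with (RtoC (- ln (INR n))) by (rewrite RtoC_opp; ring).
    rewrite cexp_mlnn by auto.
    rewrite !RtoC_inv by (apply INR_fact_nz || (apply INR_nz; auto)).
    rewrite fact_simpl, mult_INR, RtoC_mult. field. split; apply RtoC_nz. apply INR_nz; auto. apply INR_fact_nz. }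
  exact (Ccv_unique _ _ _ (rgamma_cv (RtoC 1)) H2).
Qed.

Lemma rgamma_nat m : rgamma (RtoC (INR (S m))) = RtoC (/ INR (fact m)).
Proof.
  induction m. simpl. rewrite Rinv_1. apply rgamma_one.
  pose proof (rgamma_rec (RtoC (INR (S m)))) as H. rewrite IHm in H.
  replace (Cplus (RtoC (INR (S m))) (RtoC 1)) with (RtoC (INR (S (S m)))) in H by (rewrite (S_INR (S m)), RtoC_plus; auto).
  assert (INR (S m) <> 0) by (apply INR_nz; lia).
  rewrite fact_simpl, mult_INR, Rinv_mult, RtoC_mult.
  rewrite H. rewrite RtoC_inv by auto. field. apply RtoC_nz. auto.
Qed.

Lemma rgamma_shift_n c n : rgamma c = Cmult (poch c n) (rgamma (Cplus c (RtoC (INR n)))).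
Proof.
  induction n. simpl. replace (Cplus c (RtoC 0)) with c by ring. ring.
  rewrite IHn, rgamma_rec, poch_S, S_INR, RtoC_plus. 
  replace (Cplus (Cplus c (RtoC (INR n))) (RtoC 1)) with (Cplus c (Cplus (RtoC (INR n)) (RtoC 1))) by ring. ring.
Qed.

Lemma rgamma_bound c : exists M, 0 <= M /\ forall p, Cmod (rgamma (Cplus c (RtoC (INR p)))) <= M * 2 ^ p / INR (fact p).
Proof.
  destruct (nat_above (2 * Cmod c + 1)) as [p1 Hp1].
  set (f := fun p => Cmod (rgamma (Cplus c (RtoC (INR p)))) * INR (fact p) / 2 ^ p).
  assert (Hf0 : forall p, 0 <= f p).
  { intros p. unfold f. apply Rmult_le_pos. apply Rmult_le_pos. apply Cmod_ge_0. apply pos_INR.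
    left. apply Rinv_0_lt_compat. apply pow_lt. lra. }
  set (M := rsum f (S p1)). exists M. split. apply rsum_nonneg. auto.
  assert (Hsmall : forall p, (p <= p1)%nat -> f p <= M).
  { intros p Hp. unfold M. eapply Rle_trans; [|apply (rsum_mono f (S p) (S p1)); auto; lia].
    simpl. pose proof (rsum_nonneg f p ltac:(auto)). lra. }
  assert (Hconv : forall p, f p <= M -> Cmod (rgamma (Cplus c (RtoC (INR p)))) <= M * 2 ^ p / INR (fact p)).
  { intros p Hp. unfold f in Hp. pose proof (INR_fact_lt_0 p). pose proof (pow_lt 2 p ltac:(lra)).
    apply Rmult_le_reg_r with (INR (fact p) / 2 ^ p). apply Rdiv_lt_0_compat; lra.
    replace (M * 2 ^ p / INR (fact p) * (INR (fact p) / 2 ^ p)) with M by (field; lra).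
    unfold Rdiv in *. rewrite <- Rmult_assoc. auto. }
  assert (Hbig : forall d, f (p1 + d)%nat <= M).
  { induction d. rewrite Nat.add_0_r. apply Hsmall. lia.
    set (p := (p1 + d)%nat) in *. rewrite Nat.add_succ_r. fold p.
    assert (Hp : INR p1 <= INR p) by (apply le_INR; unfold p; lia).
    pose proof (rgamma_rec (Cplus c (RtoC (INR p)))) as Hr.
    replace (Cplus (Cplus c (RtoC (INR p))) (RtoC 1)) with (Cplus c (RtoC (INR (S p)))) in Hr by (rewrite S_INR, RtoC_plus; ring).
    assert (Hcp : (INR p + 1) / 2 <= Cmod (Cplus c (RtoC (INR p)))).
    { pose proof (Cmod_triangle (Cplus c (RtoC (INR p))) (Copp c)).
      replace (Cplus (Cplus c (RtoC (INR p))) (Copp c)) with (RtoC (INR p)) in H by ring.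
      rewrite Cmod_R, Rabs_pos_eq in H by apply pos_INR.
      replace (Copp c) with (Cmult (RtoC (-1)) c) in H by ring. rewrite Cmod_mult, Cmod_R, Rabs_left in H by lra. lra. }
    unfold f in IHd |- *. rewrite Hr in IHd. rewrite Cmod_mult in IHd.
    set (R1 := Cmod (rgamma (Cplus c (RtoC (INR (S p)))))) in *.
    rewrite fact_simpl, mult_INR, S_INR. simpl pow.
    pose proof (INR_fact_lt_0 p). pose proof (pow_lt 2 p ltac:(lra)).
    assert (0 <= R1) by apply Cmod_ge_0.
    assert (R1 * ((INR p + 1)/2) * INR (fact p) / 2 ^ p <= M).
    { eapply Rle_trans; [|exact IHd]. unfold Rdiv. apply Rmult_le_compat_r. left. apply Rinv_0_lt_compat. lra.
      apply Rmult_le_compat_r. lra. rewrite (Rmult_comm (Cmod _)). apply Rmult_le_compat_l; lra. }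
    replace (R1 * ((INR p + 1) * INR (fact p)) / (2 * 2 ^ p)) with (R1 * ((INR p + 1)/2) * INR (fact p) / 2 ^ p) by (field; lra).
    auto. }
  intros p. apply Hconv. destruct (le_lt_dec p p1). apply Hsmall; auto.
  replace p with (p1 + (p - p1))%nat by lia. apply Hbig.
Qed.

Local Open Scope bool_scope.

Fixpoint binom (n k : nat) : nat :=
  match n, k with
  | _, O => 1%nat
  | O, S _ => 0%nat
  | S n', S k' => (binom n' k' + binom n' (S k'))%nat
  end.

Lemma binom_gt n k : (n < k)%nat -> binom n k = 0%nat.
Proof. revert k; induction n; intros k H; destruct k; simpl; try lia; auto.
  rewrite !IHn by lia. auto. Qed.

Lemma binom_0 n : binom n 0 = 1%nat.
Proof. destruct n; auto. Qed.

Lemma binom_S n k : binom (S n) (S k) = (binom n k + binom n (S k))%nat.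
Proof. reflexivity. Qed.

Lemma binom_fact n k : (k <= n)%nat ->
  INR (binom n k) = INR (fact n) / (INR (fact k) * INR (fact (n - k))).
Proof.
  revert k. induction n; intros k Hk.
  - replace k with 0%nat by lia. simpl. field.
  - destruct k. rewrite binom_0. rewrite Nat.sub_0_r. change (fact 0) with 1%nat. change (INR 1) with 1. field. apply INR_fact_nz.
    rewrite binom_S, plus_INR. destruct (Nat.eq_dec k n).
    + subst. rewrite (binom_gt n (S n)) by lia. rewrite IHn by lia. rewrite Nat.sub_diag.
      replace (S n - S n)%nat with 0%nat by lia. change (fact 0) with 1%nat. change (INR 1) with 1. change (INR 0) with 0. field. split; apply INR_fact_nz.
    + rewrite !IHn by lia. replace (S n - S k)%nat with (n - k)%nat by lia.
      replace (n - k)%nat with (S (n - S k))%nat at 1 by lia.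
      replace (n - k)%nat with (S (n - S k))%nat by lia.
      rewrite !fact_simpl, !mult_INR, !S_INR. rewrite minus_INR by lia. rewrite S_INR.
      pose proof (INR_fact_nz n). pose proof (INR_fact_nz k). pose proof (INR_fact_nz (n - S k)).
      assert (INR k < INR n) by (apply lt_INR; lia). pose proof (pos_INR k).
      field. repeat split; lra.
Qed.

Lemma binom_sym n k : (k <= n)%nat -> binom n k = binom n (n - k).
Proof.
  intros H. apply INR_eq. rewrite !binom_fact by lia. replace (n - (n - k))%nat with k by lia. field.
  split; apply INR_fact_nz.
Qed.

Definition bC n k := RtoC (INR (binom n k)).
Lemma csum_S f n : csum f (S n) = Cplus (csum f n) (f n).
Proof. reflexivity. Qed.
Lemma bC_0 n : bC n 0 = RtoC 1.
Proof. unfold bC. rewrite binom_0, INR_1. auto. Qed.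

Lemma vdm_binom a c n :
  csum (fun m => Cmult (bC a m) (bC c (n - m))) (S n) = bC (a + c) n.
Proof.
  revert n. induction a; intros n.
  - rewrite csum_first. unfold bC. rewrite binom_0, Nat.sub_0_r. simpl (0 + c)%nat.
    rewrite (csum_ext _ (fun _ => RtoC 0)). rewrite csum_zero, INR_1. ring.
    intros i Hi. simpl binom. rewrite INR_0. ring.
  - destruct n.
    + simpl. unfold bC. rewrite !binom_0, INR_1. ring.
    + rewrite csum_first. rewrite bC_0, Nat.sub_0_r.
      rewrite (csum_ext _ (fun m => Cplus (Cmult (bC a m) (bC c (n - m))) (Cmult (bC a (S m)) (bC c (S n - S m))))).
      2:{ intros m Hm. unfold bC. rewrite binom_S, plus_INR, RtoC_plus. simpl (S n - S m)%nat. ring. }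
      rewrite csum_plus, IHa.
      pose proof (IHa (S n)) as H2. rewrite csum_first, bC_0, Nat.sub_0_r in H2.
      transitivity (Cplus (bC (a + c) n) (Cplus (Cmult (RtoC 1) (bC c (S n))) (csum (fun i => Cmult (bC a (S i)) (bC c (S n - S i))) (S n)))).
      ring. rewrite H2. unfold bC. simpl (S a + c)%nat. rewrite binom_S, plus_INR, RtoC_plus. ring.
Qed.

Lemma vdm_poch x y n :
  poch (Cplus x y) n = csum (fun p => Cmult (bC n p) (Cmult (poch x p) (poch y (n - p)))) (S n).
Proof.
  induction n.
  - simpl. unfold bC. simpl. ring.
  - rewrite poch_S, IHn.
    assert (E : forall p, (p < S n)%nat ->
      Cmult (Cmult (bC n p) (Cmult (poch x p) (poch y (n - p)))) (Cplus (Cplus x y) (RtoC (INR n))) =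
      Cplus (Cmult (bC n p) (Cmult (poch x (S p)) (poch y (n - p))))
            (Cmult (bC n p) (Cmult (poch x p) (poch y (S n - p))))).
    { intros p Hp. replace (S n - p)%nat with (S (n - p)) by lia. rewrite !poch_S.
      rewrite minus_INR by lia. rewrite RtoC_minus. ring. }
    rewrite Cmult_comm, <- csum_scal.
    rewrite (csum_ext _ _ (S n) (fun p Hp => eq_trans (Cmult_comm _ _) (E p Hp))).
    rewrite csum_plus.
    rewrite (csum_first (fun p => Cmult (bC (S n) p) _)). rewrite bC_0, Nat.sub_0_r.
    rewrite (csum_ext (fun q => Cmult (bC (S n) (S q)) (Cmult (poch x (S q)) (poch y (S n - S q))))
      (fun q => Cplus (Cmult (bC n q) (Cmult (poch x (S q)) (poch y (n - q))))
                      (Cmult (bC n (S q)) (Cmult (poch x (S q)) (poch y (n - q)))))).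
    2:{ intros q Hq. unfold bC. rewrite binom_S, plus_INR, RtoC_plus. simpl (S n - S q)%nat. ring. }
    rewrite csum_plus.
    rewrite (csum_first (fun p => Cmult (bC n p) (Cmult (poch x p) (poch y (S n - p))))).
    rewrite bC_0, Nat.sub_0_r.
    rewrite (csum_ext (fun i => Cmult (bC n (S i)) (Cmult (poch x (S i)) (poch y (S n - S i))))
       (fun q => Cmult (bC n (S q)) (Cmult (poch x (S q)) (poch y (n - q))))) by (intros; reflexivity).
    rewrite (csum_S (fun q => Cmult (bC n (S q)) (Cmult (poch x (S q)) (poch y (n - q)))) n).
    replace (bC n (S n)) with (RtoC 0) by (unfold bC; rewrite binom_gt by lia; auto).
    change (poch x 0) with (RtoC 1). ring.
Qed.

Lemma poch_refl c m : poch c m = Cmult (Cpow (RtoC (-1)) m) (poch (Cminus (RtoC (1 - INR m)) c) m).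
Proof.
  induction m. simpl. ring.
  rewrite poch_S, IHm. rewrite (poch_shift (Cminus (RtoC (1 - INR (S m))) c) m).
  replace (Cplus (Cminus (RtoC (1 - INR (S m))) c) (RtoC 1)) with (Cminus (RtoC (1 - INR m)) c)
    by (rewrite S_INR, !RtoC_minus, RtoC_plus; ring).
  rewrite (S_INR m), (RtoC_minus 1 (INR m + 1)), RtoC_plus. simpl Cpow. ring.
Qed.

Lemma poch_int a m : poch (RtoC (INR a + 1)) m = RtoC (INR (fact (a + m)) / INR (fact a)).
Proof.
  induction m. rewrite Nat.add_0_r. simpl. f_equal. field. apply INR_fact_nz.
  rewrite poch_S, IHm. rewrite Nat.add_succ_r, fact_simpl, mult_INR, S_INR, plus_INR.
  rewrite <- RtoC_plus, <- RtoC_mult. f_equal. field. apply INR_fact_nz.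
Qed.

Lemma mone_pow_add a b : Cmult (Cpow (RtoC (-1)) a) (Cpow (RtoC (-1)) b) = Cpow (RtoC (-1)) (a + b).
Proof. rewrite Cpow_add_r. auto. Qed.

Lemma mone_pow_sq a : Cmult (Cpow (RtoC (-1)) a) (Cpow (RtoC (-1)) a) = RtoC 1.
Proof. rewrite <- Cpow_mult_l. replace (Cmult (RtoC (-1)) (RtoC (-1))) with (RtoC 1) by (rewrite <- RtoC_mult; f_equal; ring).
  apply Cpow_1_l. Qed.

Definition Pa (mu : C) (N p : nat) := poch (Cplus (Cplus mu (RtoC 1)) (RtoC (INR p))) (N - p).
Definition Pb (mu : C) (N q : nat) := poch (Cplus (Cminus (RtoC 1) mu) (RtoC (INR q))) (N - q).

Lemma V2 mu N : csum (fun p => Cmult (bC N p) (Cmult (Pa mu N p) (Pb mu N (N - p)))) (S N)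
  = RtoC (INR (fact (N + N)) / INR (fact N)).
Proof.
  rewrite (csum_ext _ (fun p => Cmult (Cpow (RtoC (-1)) N) (Cmult (bC N p)
     (Cmult (poch (Cminus mu (RtoC (INR N))) p) (poch (Cminus (Copp mu) (RtoC (INR N))) (N - p)))))).
  2:{ intros p Hp. unfold Pa, Pb. replace (N - (N - p))%nat with p by lia.
      rewrite (poch_refl _ (N - p)), (poch_refl _ p).
      replace (Cminus (RtoC (1 - INR (N - p))) (Cplus (Cplus mu (RtoC 1)) (RtoC (INR p))))
        with (Cminus (Copp mu) (RtoC (INR N))) by (rewrite minus_INR by lia; rewrite !RtoC_minus; ring).
      replace (Cminus (RtoC (1 - INR p)) (Cplus (Cminus (RtoC 1) mu) (RtoC (INR (N - p)))))
        with (Cminus mu (RtoC (INR N))) by (rewrite minus_INR by lia; rewrite !RtoC_minus; ring).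
      replace (Cpow (RtoC (-1)) N) with (Cmult (Cpow (RtoC (-1)) (N - p)) (Cpow (RtoC (-1)) p)) by (rewrite mone_pow_add; f_equal; lia). ring. }
  rewrite csum_scal, <- vdm_poch.
  rewrite poch_refl. rewrite <- poch_int.
  replace (Cminus (RtoC (1 - INR N)) (Cplus (Cminus mu (RtoC (INR N))) (Cminus (Copp mu) (RtoC (INR N)))))
    with (RtoC (INR N + 1)) by (rewrite !RtoC_minus, RtoC_plus; ring).
  rewrite Cmult_assoc, mone_pow_sq. ring.
Qed.

Lemma bC_sym_hi n k : (k <= n)%nat -> bC (2 * n) (n + k) = bC (2 * n) (n - k).
Proof. intros. unfold bC. rewrite binom_sym by lia. f_equal. f_equal. f_equal. lia. Qed.
Lemma bC_gt n k : (n < k)%nat -> bC n k = RtoC 0.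
Proof. intros. unfold bC. rewrite binom_gt by auto. auto. Qed.

Lemma V1 p q I : (p < I)%nat -> (q < I)%nat ->
  csum (fun L => if (L <=? p) && (L <=? q) then Cmult (RtoC (2 - deltaL0 L)) (Cmult (bC (2*p) (p-L)) (bC (2*q) (q-L))) else RtoC 0) I
  = bC (2*(p+q)) (p+q).
Proof.
  intros Hp Hq.
  set (bb := fun L => Cmult (bC (2*p) (p-L)) (bC (2*q) (q-L))).
  rewrite (csum_ext _ (fun L => Cplus (if (L <=? p) && (L <=? q) then bb L else RtoC 0)
                                      (if (1 <=? L) && (L <=? p) && (L <=? q) then bb L else RtoC 0))).
  2:{ intros L HL. unfold bb. destruct L as [|L].
      - unfold deltaL0. simpl. rewrite RtoC_minus. ring.
      - replace (deltaL0 (S L)) with 0 by reflexivity. replace (1 <=? S L)%nat with true by reflexivity.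
        destruct (S L <=? p), (S L <=? q); simpl; rewrite ?RtoC_minus; ring. }
  rewrite csum_plus.
  assert (F1 : csum (fun L => if (L <=? p) && (L <=? q) then bb L else RtoC 0) I
             = csum (fun m => Cmult (bC (2*p) m) (bC (2*q) (p + q - m))) (S p)).
  { rewrite (csum_extend _ (S p) I); [ | lia | intros i Hi; destruct (Nat.leb_spec i p); [lia|auto] ].
    rewrite (csum_rev (fun m => Cmult (bC (2*p) m) (bC (2*q) (p + q - m)))).
    apply csum_ext. intros L HL. replace (S p - 1 - L)%nat with (p - L)%nat by lia.
    replace (p + q - (p - L))%nat with (q + L)%nat by lia.
    destruct (Nat.leb_spec L p); [|lia]. destruct (Nat.leb_spec L q); cbn [andb].
    - rewrite bC_sym_hi by auto. auto.
    - rewrite (bC_gt (2*q) (q+L)) by lia. ring. }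
  assert (F2 : csum (fun L => if (1 <=? L) && (L <=? p) && (L <=? q) then bb L else RtoC 0) I
             = csum (fun i => Cmult (bC (2*p) (S p + i)) (bC (2*q) (p + q - (S p + i)))) q).
  { destruct I. lia. rewrite csum_first. cbn beta. change ((1 <=? 0)%nat) with false. cbn [andb].
    rewrite (csum_extend _ q I).
    2: lia.
    2:{ intros i Hi. destruct (Nat.leb_spec (S i) q). lia. rewrite Bool.andb_false_r. auto. }
    rewrite Cplus_0_l. apply csum_ext. intros i Hi.
    replace (S p + i)%nat with (p + S i)%nat by lia. replace (p + q - (p + S i))%nat with (q - S i)%nat by lia.
    destruct (Nat.leb_spec (S i) q); [|lia]. replace (1 <=? S i)%nat with true by reflexivity. destruct (Nat.leb_spec (S i) p); cbn [andb].
    - rewrite bC_sym_hi by auto. auto.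
    - rewrite (bC_gt (2*p) (p + S i)) by lia. ring. }
  rewrite F1, F2, <- csum_split. replace (S p + q)%nat with (S (p + q)) by lia.
  rewrite vdm_binom. f_equal. lia.
Qed.

Lemma poch_half L i : poch (Cplus (RtoC (INR L)) (RtoC (1/2))) i =
  RtoC (INR (fact (2*(L+i))) * INR (fact L) / (INR (fact (2*L)) * INR (fact (L+i)) * 4 ^ i)).
Proof.
  induction i.
  - rewrite Nat.add_0_r. simpl poch. f_equal. simpl pow. field. split; apply INR_fact_nz.
  - rewrite poch_S, IHi. replace (2 * (L + S i))%nat with (S (S (2 * (L + i)))) by lia.
    replace (L + S i)%nat with (S (L + i)) by lia.
    rewrite !(fact_simpl (S _)), !fact_simpl, !mult_INR, !S_INR, mult_INR, plus_INR.
    rewrite <- !RtoC_plus, <- RtoC_mult. f_equal. simpl pow.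
    pose proof (INR_fact_nz (2*L)). pose proof (INR_fact_nz (L+i)). pose proof (pos_INR L). pose proof (pos_INR i).
    simpl (INR 2). field. repeat split; try lra. apply pow_nonzero. lra.
Qed.

Definition hterm (as_ bs : list C) (z : C) (n : nat) : C :=
    Cmult (Cmult (fold_right Cmult (RtoC 1) (map (fun a => poch a n) as_))
                 (fold_right Cmult (RtoC 1) (map (fun b => rgamma (Cplus b (RtoC (INR n)))) bs)))
          (Cdiv (pow_n z n) (RtoC (INR (Factorial.fact n)))).

Lemma hyp_reg_eq as_ bs z : hyp_reg as_ bs z = CSeries (hterm as_ bs z).
Proof. reflexivity. Qed.

Definition xx (k : C) := Cmult k k.
Definition Aa mu p := rgamma (Cplus (Cplus mu (RtoC 1)) (RtoC (INR p))).
Definition Bb mu q := rgamma (Cplus (Cminus (RtoC 1) mu) (RtoC (INR q))).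

Definition uT k mu L := hterm [Cplus (RtoC (INR L)) (RtoC (1/2))]
                     [RtoC (INR (2 * L + 1)); Cplus (RtoC (INR L + 1)) mu]
                     (Copp (Cdiv (Cmult k k) (RtoC 4))).
Definition vT k mu L := hterm [Cplus (RtoC (INR L)) (RtoC (1/2))]
                     [RtoC (INR (2 * L + 1)); Cminus (RtoC (INR L + 1)) mu]
                     (Copp (Cdiv (Cmult k k) (RtoC 4))).
Definition tT k mu := hterm [RtoC (1/2); RtoC (1/2)]
             [RtoC 1; Cminus (RtoC 1) mu; Cplus mu (RtoC 1)]
             (Copp (Cmult k k)).
Definition Dc k L :=
         (Cdiv
            (Cmult (Cmult (Cmult (pow_n (RtoC (-1)) (2 * L)) (pow_n k (4 * L)))
                          (RtoC (INR (Factorial.fact (2 * L)) ^ 2)))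
                   (RtoC (/ 2 ^ (8 * L) * (2 - deltaL0 L))))
            (RtoC (INR (Factorial.fact L) ^ 2))).

Lemma RtoC_inv' r : RtoC (/ r) = Cinv (RtoC r).
Proof.
  destruct (Req_dec r 0). subst. rewrite Rinv_0. unfold Cinv. apply Ceq; simpl; unfold Rdiv; ring.
  rewrite RtoC_inv; auto.
Qed.

Lemma Cdiv_RtoC z r : Cdiv z (RtoC r) = Cmult z (RtoC (/ r)).
Proof. unfold Cdiv. rewrite RtoC_inv'. auto. Qed.

Lemma rg_int a b : rgamma (Cplus (RtoC (INR (a + 1))) (RtoC (INR b))) = RtoC (/ INR (fact (a + b))).
Proof. rewrite <- rgamma_nat. f_equal. rewrite <- RtoC_plus. f_equal. rewrite <- plus_INR. f_equal. lia. Qed.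

Definition ph L i := INR (fact (2*(L+i))) * INR (fact L) / (INR (fact (2*L)) * INR (fact (L+i)) * 4 ^ i).
Definition ru L i := ph L i * / INR (fact (2*L+i)) * / INR (fact i) * / 4 ^ i.
Definition rd L := INR (fact (2*L)) ^ 2 * (/ 2 ^ (8 * L) * (2 - deltaL0 L)) * / INR (fact L) ^ 2.
Definition rt N := ph 0 N * ph 0 N * / INR (fact N) * / INR (fact N).

Lemma cpow_quarter (x : C) i : pow_n (Copp (Cdiv x (RtoC 4))) i = Cmult (Cpow (Copp x) i) (RtoC ((/ 4) ^ i)).
Proof. rewrite pow_n_Cpow. rewrite RtoC_pow. rewrite <- Cpow_mult_l. f_equal. rewrite Cdiv_RtoC. ring. Qed.

Lemma uT_nf k mu L i : uT k mu L i = Cmult (Cpow (Copp (xx k)) i) (Cmult (RtoC (ru L i)) (Aa mu (L + i))).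
Proof.
  unfold uT, hterm. cbn [map fold_right]. rewrite poch_half. fold (ph L i).
  rewrite rg_int. rewrite cpow_quarter. rewrite Cdiv_RtoC.
  replace (Cplus (Cplus (RtoC (INR L + 1)) mu) (RtoC (INR i))) with (Cplus (Cplus mu (RtoC 1)) (RtoC (INR (L + i))))
    by (rewrite plus_INR, !RtoC_plus; ring).
  fold (Aa mu (L + i)). unfold ru, xx. rewrite pow_inv. rewrite !RtoC_mult. ring.
Qed.

Lemma vT_nf k mu L j : vT k mu L j = Cmult (Cpow (Copp (xx k)) j) (Cmult (RtoC (ru L j)) (Bb mu (L + j))).
Proof.
  unfold vT, hterm. cbn [map fold_right]. rewrite poch_half. fold (ph L j).
  rewrite rg_int. rewrite cpow_quarter. rewrite Cdiv_RtoC.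
  replace (Cplus (Cminus (RtoC (INR L + 1)) mu) (RtoC (INR j))) with (Cplus (Cminus (RtoC 1) mu) (RtoC (INR (L + j))))
    by (rewrite plus_INR, !RtoC_plus; ring).
  fold (Bb mu (L + j)). unfold ru, xx. rewrite pow_inv. rewrite !RtoC_mult. ring.
Qed.

Lemma Dc_nf k L : Dc k L = Cmult (Cpow (Copp (xx k)) (2 * L)) (RtoC (rd L)).
Proof.
  unfold Dc, rd, xx. rewrite (pow_n_Cpow k), (pow_n_Cpow (RtoC (-1))). rewrite Cdiv_RtoC.
  replace (Cpow (RtoC (-1)) (2 * L)) with (RtoC 1).
  2:{ rewrite Cpow_mult_r. replace (Cpow (RtoC (-1)) 2) with (RtoC 1). rewrite Cpow_1_l. auto.
      apply Ceq; simpl; ring. }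
  replace (Cpow k (4 * L)) with (Cpow (Copp (Cmult k k)) (2 * L)).
  2:{ rewrite !Cpow_mult_r. f_equal. simpl. ring. }
  rewrite !RtoC_mult. ring.
Qed.

Lemma tT_nf k mu N : tT k mu N = Cmult (Cpow (Copp (xx k)) N) (Cmult (RtoC (rt N)) (Cmult (Aa mu N) (Bb mu N))).
Proof.
  unfold tT, hterm. cbn [map fold_right].
  replace (RtoC (1/2)) with (Cplus (RtoC (INR 0)) (RtoC (1/2))) by (simpl; ring).
  rewrite poch_half. fold (ph 0 N).
  replace (Cplus (RtoC 1) (RtoC (INR N))) with (RtoC (INR (S N))) by (rewrite S_INR, RtoC_plus; ring).
  rewrite rgamma_nat. rewrite pow_n_Cpow, Cdiv_RtoC.
  replace (Cplus (Cplus mu (RtoC 1)) (RtoC (INR N))) with (Cplus (Cplus mu (RtoC 1)) (RtoC (INR N))) by auto.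
  fold (Aa mu N). fold (Bb mu N). unfold rt, xx. rewrite !RtoC_mult. ring.
Qed.

Definition rr L i j := (2 - deltaL0 L) * INR (binom (2*(L+i)) i) * INR (binom (2*(L+j)) j)
   / (INR (fact (L+i)) * INR (fact (L+j)) * 16 ^ (2*L+i+j)).
Definition tau N := INR (binom (2*N) N) ^ 2 / 16 ^ N.

Lemma pow16 n : 16 ^ n = 4 ^ n * 4 ^ n.
Proof. rewrite <- Rpow_mult_distr. f_equal. ring. Qed.
Lemma pow2_8 L : 2 ^ (8 * L) = 16 ^ (2 * L).
Proof. rewrite !pow_mult. f_equal. ring. Qed.

Lemma r_id L i j : rd L * ru L i * ru L j = rr L i j.
Proof.
  unfold rd, ru, ph, rr. rewrite !binom_fact by lia.
  replace (2 * (L + i) - i)%nat with (2 * L + i)%nat by lia.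
  replace (2 * (L + j) - j)%nat with (2 * L + j)%nat by lia.
  rewrite !pow_add, pow2_8, !(pow16 i), !(pow16 j).
  pose proof (INR_fact_nz (2*L)). pose proof (INR_fact_nz L). pose proof (INR_fact_nz (L+i)). pose proof (INR_fact_nz (L+j)).
  pose proof (INR_fact_nz (2*L+i)). pose proof (INR_fact_nz (2*L+j)). pose proof (INR_fact_nz i). pose proof (INR_fact_nz j).
  assert (4 ^ i <> 0) by (apply pow_nonzero; lra). assert (4 ^ j <> 0) by (apply pow_nonzero; lra).
  assert (16 ^ (2 * L) <> 0) by (apply pow_nonzero; lra).
  field. repeat split; auto.
Qed.

Lemma t_id N : rt N = tau N.
Proof.
  unfold rt, ph, tau. rewrite binom_fact by lia. replace (2 * N - N)%nat with N by lia.
  rewrite pow16. simpl (2 * 0)%nat. rewrite Nat.add_0_l. change (fact 0) with 1%nat. simpl (INR 1).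
  pose proof (INR_fact_nz N). assert (4 ^ N <> 0) by (apply pow_nonzero; lra).
  field. auto.
Qed.

Lemma W_nf k mu L i j :
  Cmult (Dc k L) (Cmult (uT k mu L i) (vT k mu L j)) =
  Cmult (Cpow (Copp (xx k)) (2 * L + i + j)) (Cmult (RtoC (rr L i j)) (Cmult (Aa mu (L + i)) (Bb mu (L + j)))).
Proof.
  rewrite Dc_nf, uT_nf, vT_nf, <- r_id, !Cpow_add_r, !RtoC_mult. ring.
Qed.

Lemma csum_ind_eq (g : nat -> C) a N I : (N < I)%nat ->
  csum (fun j => if (a + j =? N)%nat then g j else RtoC 0) I = if (a <=? N)%nat then g (N - a)%nat else RtoC 0.
Proof.
  intros HI. destruct (Nat.leb_spec a N).
  - rewrite (csum_ext _ (fun j => if (j =? N - a)%nat then g j else RtoC 0)).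
    apply csum_delta. lia.
    intros j Hj. destruct (Nat.eqb_spec (a + j) N), (Nat.eqb_spec j (N - a)); auto; lia.
  - rewrite (csum_ext _ (fun _ => RtoC 0)). apply csum_zero.
    intros j Hj. destruct (Nat.eqb_spec (a + j) N); auto; lia.
Qed.

Lemma csum_shift_ind (F : nat -> C) I L : (L <= I)%nat -> (forall i, (I - L <= i)%nat -> F i = RtoC 0) ->
  csum F I = csum (fun p => if (L <=? p)%nat then F (p - L)%nat else RtoC 0) I.
Proof.
  intros HL HF. replace I with (L + (I - L))%nat at 2 by lia. rewrite csum_split.
  rewrite (csum_ext _ (fun _ => RtoC 0) L). rewrite csum_zero, Cplus_0_l.
  rewrite (csum_ext (fun i => if (L <=? L + i)%nat then F (L + i - L)%nat else RtoC 0) F).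
  apply csum_extend; auto. lia.
  intros i Hi. destruct (Nat.leb_spec L (L + i)). f_equal. lia. lia.
  intros i Hi. destruct (Nat.leb_spec L i). lia. auto.
Qed.

Lemma csum_ind_lt (w : C) a K :
  csum (fun N => if (a =? N)%nat then w else RtoC 0) K = if (a <? K)%nat then w else RtoC 0.
Proof.
  destruct (Nat.ltb_spec a K).
  - rewrite (csum_ext _ (fun N => if (N =? a)%nat then w else RtoC 0)). apply csum_delta. auto.
    intros. rewrite Nat.eqb_sym. auto.
  - rewrite (csum_ext _ (fun _ => RtoC 0)). apply csum_zero. intros. destruct (Nat.eqb_spec a i); auto; lia.
Qed.

Lemma Aa_shift mu N p : (p <= N)%nat -> Aa mu p = Cmult (Pa mu N p) (Aa mu N).
Proof.
  intros H. unfold Aa, Pa. rewrite (rgamma_shift_n _ (N - p)). f_equal. f_equal.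
  rewrite minus_INR by auto. rewrite RtoC_minus. ring.
Qed.
Lemma Bb_shift mu N q : (q <= N)%nat -> Bb mu q = Cmult (Pb mu N q) (Bb mu N).
Proof.
  intros H. unfold Bb, Pb. rewrite (rgamma_shift_n _ (N - q)). f_equal. f_equal.
  rewrite minus_INR by auto. rewrite RtoC_minus. ring.
Qed.

Lemma rr_p L p N : (L <= p)%nat -> (L <= N - p)%nat -> (p <= N)%nat ->
  rr L (p - L) (N - p - L) = (2 - deltaL0 L) * INR (binom (2*p) (p-L)) * INR (binom (2*(N-p)) (N-p-L))
     / (INR (fact p) * INR (fact (N - p)) * 16 ^ N).
Proof.
  intros. unfold rr. replace (L + (p - L))%nat with p by lia. replace (L + (N - p - L))%nat with (N - p)%nat by lia.
  replace (2 * L + (p - L) + (N - p - L))%nat with N by lia. auto.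
Qed.

Definition Wt k mu L i j := Cmult (Dc k L) (Cmult (uT k mu L i) (vT k mu L j)).

Lemma perN k mu N I : (N < I)%nat ->
  csum (fun L => csum (fun i => csum (fun j => if (2*L+i+j =? N)%nat then Wt k mu L i j else RtoC 0) I) I) I = tT k mu N.
Proof.
  intros HI.
  transitivity (Cmult (Cpow (Copp (xx k)) N) (csum (fun L => csum (fun i => csum (fun j =>
     if (2*L+i+j =? N)%nat then Cmult (RtoC (rr L i j)) (Cmult (Aa mu (L+i)) (Bb mu (L+j))) else RtoC 0) I) I) I)).
  { rewrite <- csum_scal. apply csum_ext; intros L HL. rewrite <- csum_scal. apply csum_ext; intros i Hi.
    rewrite <- csum_scal. apply csum_ext; intros j Hj. destruct (Nat.eqb_spec (2*L+i+j) N).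
    unfold Wt. rewrite W_nf. rewrite e. auto. ring. }
  rewrite tT_nf. f_equal.
  rewrite (csum_ext _ (fun L => csum (fun i => if (2*L+i <=? N)%nat then
      Cmult (RtoC (rr L i (N - (2*L+i)))) (Cmult (Aa mu (L+i)) (Bb mu (L + (N - (2*L+i))))) else RtoC 0) I)).
  2:{ intros L HL. apply csum_ext. intros i Hi.
      apply (csum_ind_eq (fun j => Cmult (RtoC (rr L i j)) (Cmult (Aa mu (L+i)) (Bb mu (L+j)))) (2*L+i) N I HI). }
  rewrite (csum_ext _ (fun L => csum (fun p => if (L <=? p) && (L + p <=? N) then
      Cmult (RtoC (rr L (p - L) (N - p - L))) (Cmult (Aa mu p) (Bb mu (N - p))) else RtoC 0) I)).
  2:{ intros L HL. rewrite (csum_shift_ind _ I L).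
      - apply csum_ext. intros p Hp. destruct (Nat.leb_spec L p); cbn [andb]; [|auto].
        destruct (Nat.leb_spec (2*L + (p-L)) N), (Nat.leb_spec (L+p) N); try lia; [|auto].
        replace (L + (p - L))%nat with p by lia. replace (N - (2*L + (p-L)))%nat with (N - p - L)%nat by lia.
        replace (L + (N-p-L))%nat with (N - p)%nat by lia. auto.
      - lia.
      - intros i Hi. destruct (Nat.leb_spec (2*L+i) N); [lia|auto]. }
  rewrite csum_swap.
  rewrite (csum_ext _ (fun p => if (p <=? N)%nat then Cmult (RtoC (INR (binom (2*N) N) / (INR (fact p) * INR (fact (N-p)) * 16^N)))
      (Cmult (Aa mu p) (Bb mu (N-p))) else RtoC 0)).
  2:{ intros p Hp. destruct (Nat.leb_spec p N).
     - transitivity (Cmult (Cmult (RtoC (/ (INR (fact p) * INR (fact (N-p)) * 16^N))) (Cmult (Aa mu p) (Bb mu (N-p))))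
         (csum (fun L => if (L <=? p) && (L <=? N - p) then Cmult (RtoC (2 - deltaL0 L)) (Cmult (bC (2*p) (p-L)) (bC (2*(N-p)) (N-p-L))) else RtoC 0) I)).
       + rewrite <- csum_scal. apply csum_ext. intros L HL.
         destruct (Nat.leb_spec L p), (Nat.leb_spec (L+p) N), (Nat.leb_spec L (N-p)); try lia; cbn [andb]; try ring.
         rewrite rr_p by lia. unfold bC. unfold Rdiv. rewrite !RtoC_mult. ring.
       + rewrite V1 by lia. replace (2*(p + (N-p)))%nat with (2*N)%nat by lia. replace (p + (N-p))%nat with N by lia.
         unfold bC. unfold Rdiv. rewrite !RtoC_mult. ring.
     - rewrite (csum_ext _ (fun _ => RtoC 0)). apply csum_zero. intros L HL.
       destruct (Nat.leb_spec (L+p) N). lia. rewrite Bool.andb_false_r. auto. }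
  rewrite (csum_extend _ (S N) I); [|lia| intros p Hp; destruct (Nat.leb_spec p N); [lia|auto]].
  rewrite (csum_ext _ (fun p => Cmult (Cmult (RtoC (INR (binom (2*N) N) / (INR (fact N) * 16^N))) (Cmult (Aa mu N) (Bb mu N)))
        (Cmult (bC N p) (Cmult (Pa mu N p) (Pb mu N (N - p)))))).
  2:{ intros p Hp. destruct (Nat.leb_spec p N); [|lia]. rewrite (Aa_shift mu N p), (Bb_shift mu N (N-p)) by lia.
      unfold bC. rewrite (binom_fact N p) by lia.
      pose proof (INR_fact_nz N). pose proof (INR_fact_nz p). pose proof (INR_fact_nz (N-p)). assert (16 ^ N <> 0) by (apply pow_nonzero; lra).
      replace (INR (binom (2*N) N) / (INR (fact p) * INR (fact (N-p)) * 16^N)) with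
        ((INR (binom (2*N) N) / (INR (fact N) * 16^N)) * (INR (fact N) / (INR (fact p) * INR (fact (N-p))))) by (field; auto).
      rewrite RtoC_mult. ring. }
  rewrite csum_scal, V2.
  assert (Hb : INR (binom (2*N) N) = INR (fact (2*N)) / (INR (fact N) * INR (fact N))).
  { rewrite binom_fact by lia. replace (2*N-N)%nat with N by lia. auto. }
  replace (N + N)%nat with (2*N)%nat by lia. rewrite t_id. unfold tau. rewrite Hb.
  pose proof (INR_fact_nz N). assert (16 ^ N <> 0) by (apply pow_nonzero; lra).
  transitivity (Cmult (RtoC (INR (fact (2 * N)) / (INR (fact N) * INR (fact N)) / (INR (fact N) * 16 ^ N) * (INR (fact (2 * N)) / INR (fact N)))) (Cmult (Aa mu N) (Bb mu N))).
  rewrite RtoC_mult. ring. f_equal. f_equal. field. auto.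
Qed.

Lemma binom_le_pow n k : INR (binom n k) <= 2 ^ n.
Proof.
  revert k. induction n; intros k. destruct k; simpl; lra.
  destruct k. rewrite binom_0. simpl. pose proof (pow_R1_Rle 2 n ltac:(lra)). lra.
  rewrite binom_S, plus_INR. simpl. pose proof (IHn k). pose proof (IHn (S k)). lra.
Qed.

Lemma binom_nonneg n k : 0 <= INR (binom n k).
Proof. apply pos_INR. Qed.

Lemma fact_mul_le L i : INR (fact L) * INR (fact i) <= INR (fact (L + i)).
Proof.
  rewrite <- mult_INR. apply le_INR. induction i. rewrite Nat.add_0_r. simpl. lia.
  rewrite Nat.add_succ_r, !fact_simpl. nia.
Qed.

Lemma fact_ge1 n : 1 <= INR (fact n).
Proof. apply (le_INR 1). apply lt_O_fact. Qed.

Lemma fact2_le n : INR (fact (2 * n)) <= 4 ^ n * INR (fact n) ^ 2.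
Proof.
  pose proof (binom_le_pow (2*n) n). rewrite binom_fact in H by lia. replace (2*n-n)%nat with n in H by lia.
  pose proof (INR_fact_lt_0 n). rewrite pow_mult in H. replace (2^2) with 4 in H by ring.
  apply Rmult_le_compat_r with (r := INR (fact n) * INR (fact n)) in H. 2: nra.
  replace (INR (fact (2 * n)) / (INR (fact n) * INR (fact n)) * (INR (fact n) * INR (fact n))) with (INR (fact (2*n))) in H by (field; lra).
  lra.
Qed.

Lemma rsum_shift1 (b : nat -> R) n : rsum b (S n) = b 0%nat + rsum (fun i => b (S i)) n.
Proof. induction n. simpl. ring. simpl in *. rewrite IHn. ring. Qed.

Lemma conv_exp (a : nat -> C) (K y : R) : 0 <= K -> 0 <= y ->
  (forall n, Cmod (a n) <= K * (y ^ n / INR (fact n))) -> Ccv (fun n => csum a n) (CSeries a).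
Proof.
  intros HK Hy Ha.
  set (b := fun n => K * (y ^ n / INR (fact n))).
  assert (Hb0 : forall n, 0 <= b n).
  { intros n. unfold b. apply Rmult_le_pos; auto. apply Rdiv_le_0_compat. apply pow_le; auto. apply INR_fact_lt_0. }
  assert (HbM : forall n, rsum b n <= K * exp y).
  { intros n. unfold b. rewrite rsum_scal. apply Rmult_le_compat_l; auto. apply rsum_exp; auto. }
  assert (Hinc : ex_finite_lim_seq (rsum b)).
  { apply ex_finite_lim_seq_incr with (K * exp y). intros n. simpl. pose proof (Hb0 n). lra. auto. }
  apply ex_lim_seq_cauchy_corr in Hinc.
  assert (exists l, Ccv (fun n => csum a n) l) as [l Hl].
  { apply Ccauchy. intros eps He. destruct (Hinc (mkposreal eps He)) as [N HN]. exists N.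
    assert (Hgen : forall n m, (N <= n)%nat -> (n <= m)%nat -> Cmod (Cminus (csum a m) (csum a n)) < eps).
    { intros n m Hn Hm. replace m with (n + (m - n))%nat by lia. rewrite csum_split.
      replace (Cminus (Cplus (csum a n) (csum (fun i => a (n + i)%nat) (m - n))) (csum a n)) with (csum (fun i => a (n + i)%nat) (m - n)) by ring.
      eapply Rle_lt_trans. apply Cmod_csum.
      assert (rsum (fun i => Cmod (a (n + i)%nat)) (m - n) <= rsum b (n + (m - n)) - rsum b n).
      { clear HN. induction (m - n)%nat. simpl. rewrite Nat.add_0_r. lra. rewrite Nat.add_succ_r. simpl. pose proof (Ha (n + n0)%nat). unfold b in *. lra. }
      specialize (HN (n + (m - n))%nat n ltac:(lia) Hn). simpl in HN. rewrite Rabs_pos_eq in HN.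
      lra. pose proof (rsum_mono b n (n + (m - n)) Hb0 ltac:(lia)). lra. }
    intros n m Hn Hm. destruct (le_lt_dec n m). rewrite Cmod_sub_sym. apply Hgen; lia. apply Hgen; lia. }
  assert (Hs : Ccv (fun n => sum_n a n) l).
  { intros eps He. destruct (Hl eps He) as [N HN]. exists N. intros n Hn. rewrite sum_n_csum. apply HN. lia. }
  unfold CSeries. rewrite (Ccv_Clim _ _ Hs). auto.
Qed.

Lemma Cmod_Copp z : Cmod (Copp z) = Cmod z.
Proof. replace (Copp z) with (Cmult (RtoC (-1)) z) by ring. rewrite Cmod_mult, Cmod_R, Rabs_left by lra. ring. Qed.

Lemma delta_bounds L : 1 <= 2 - deltaL0 L <= 2.
Proof. unfold deltaL0. destruct (Nat.eqb L 0); lra. Qed.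

Lemma rr_bound L i j : 0 <= rr L i j <= 2 / (4 ^ (2*L+i+j) * (INR (fact (L+i)) * INR (fact (L+j)))).
Proof.
  unfold rr. pose proof (delta_bounds L). pose proof (binom_le_pow (2*(L+i)) i). pose proof (binom_le_pow (2*(L+j)) j).
  pose proof (binom_nonneg (2*(L+i)) i). pose proof (binom_nonneg (2*(L+j)) j).
  pose proof (INR_fact_lt_0 (L+i)). pose proof (INR_fact_lt_0 (L+j)).
  set (N := (2*L+i+j)%nat). assert (H4N : 0 < 4 ^ N) by (apply pow_lt; lra).
  assert (E16 : 16 ^ N = 4 ^ N * 4 ^ N) by apply pow16.
  assert (E4 : 2 ^ (2 * (L + i)) * 2 ^ (2 * (L + j)) = 4 ^ N).
  { rewrite <- pow_add. replace (2 * (L + i) + 2 * (L + j))%nat with (2 * N)%nat by (unfold N; lia).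
    rewrite pow_mult. f_equal. ring. }
  set (b1 := INR (binom (2 * (L + i)) i)) in *. set (b2 := INR (binom (2 * (L + j)) j)) in *.
  set (P := INR (fact (L + i))) in *. set (Q := INR (fact (L + j))) in *.
  rewrite E16. split.
  - apply Rdiv_le_0_compat. apply Rmult_le_pos. apply Rmult_le_pos; lra. lra.
    apply Rmult_lt_0_compat. nra. nra.
  - assert (b1 * b2 <= 4 ^ N). { rewrite <- E4. apply Rmult_le_compat; auto. }
    assert ((2 - deltaL0 L) * b1 * b2 <= 2 * 4 ^ N).
    { rewrite Rmult_assoc. apply Rmult_le_compat; try lra. apply Rmult_le_pos; auto. }
    apply Rmult_le_reg_r with (P * Q * (4 ^ N * 4 ^ N)). apply Rmult_lt_0_compat; nra.
    assert (0 < P * Q) by nra.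
    replace ((2 - deltaL0 L) * b1 * b2 / (P * Q * (4 ^ N * 4 ^ N)) * (P * Q * (4 ^ N * 4 ^ N))) with ((2 - deltaL0 L) * b1 * b2) by (field; split; lra).
    replace (2 / (4 ^ N * (P * Q)) * (P * Q * (4 ^ N * 4 ^ N))) with (2 * 4 ^ N) by (field; split; lra). lra.
Qed.

Lemma Wt_bound k mu MA MB L i j : 0 <= MA -> 0 <= MB ->
  (forall p, Cmod (Aa mu p) <= MA * 2 ^ p / INR (fact p)) ->
  (forall q, Cmod (Bb mu q) <= MB * 2 ^ q / INR (fact q)) ->
  2 ^ (2*L+i+j) * Cmod (Wt k mu L i j) <=
  2 * MA * MB * ((Cmod (xx k) ^ 2) ^ L / INR (fact L) * (Cmod (xx k) ^ i / INR (fact i) * (Cmod (xx k) ^ j / INR (fact j)))).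
Proof.
  intros HMA HMB HA HB. unfold Wt. rewrite W_nf. rewrite !Cmod_mult, Cmod_pow, Cmod_Copp, Cmod_R.
  pose proof (rr_bound L i j) as [R0 R1]. rewrite Rabs_pos_eq by auto.
  set (a := Cmod (xx k)). assert (Ha : 0 <= a) by apply Cmod_ge_0.
  set (N := (2*L+i+j)%nat) in *.
  set (P := INR (fact (L + i))) in *. set (Q := INR (fact (L + j))) in *.
  pose proof (INR_fact_lt_0 (L+i)) as HP. pose proof (INR_fact_lt_0 (L+j)) as HQ. fold P in HP. fold Q in HQ.
  specialize (HA (L+i)%nat). specialize (HB (L+j)%nat). fold P in HA. fold Q in HB.
  assert (H2N : 0 < 2 ^ N) by (apply pow_lt; lra). assert (H4N : 0 < 4 ^ N) by (apply pow_lt; lra).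
  assert (HaN : 0 <= a ^ N) by (apply pow_le; auto).
  pose proof (Cmod_ge_0 (Aa mu (L+i))). pose proof (Cmod_ge_0 (Bb mu (L+j))).
  assert (S1 : 2 ^ N * (a ^ N * (rr L i j * (Cmod (Aa mu (L + i)) * Cmod (Bb mu (L + j))))) <=
     2 ^ N * (a ^ N * (2 / (4 ^ N * (P * Q)) * (MA * 2 ^ (L + i) / P * (MB * 2 ^ (L + j) / Q))))).
  { apply Rmult_le_compat_l. lra. apply Rmult_le_compat_l. auto. apply Rmult_le_compat; auto.
    apply Rmult_le_pos; auto. apply Rmult_le_compat; auto. }
  assert (E2 : 2 ^ (L + i) * 2 ^ (L + j) = 2 ^ N) by (rewrite <- pow_add; f_equal; unfold N; lia).
  assert (E4 : 4 ^ N = 2 ^ N * 2 ^ N) by (rewrite <- Rpow_mult_distr; f_equal; ring).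
  assert (S2 : 2 ^ N * (a ^ N * (2 / (4 ^ N * (P * Q)) * (MA * 2 ^ (L + i) / P * (MB * 2 ^ (L + j) / Q))))
     = 2 * MA * MB * a ^ N / (P * P * (Q * Q))).
  { replace (MA * 2 ^ (L + i) / P * (MB * 2 ^ (L + j) / Q)) with (MA * MB * (2 ^ (L + i) * 2 ^ (L + j)) / (P * Q)) by (field; lra).
    rewrite E2, E4. field. repeat split; lra. }
  pose proof (fact_mul_le L i) as F1. pose proof (fact_mul_le L j) as F2. fold P in F1. fold Q in F2.
  pose proof (fact_ge1 L). pose proof (fact_ge1 i). pose proof (fact_ge1 j).
  assert (S3 : INR (fact L) * INR (fact i) * INR (fact j) <= P * P * (Q * Q)).
  { assert (X1 : INR (fact L) * INR (fact i) * INR (fact j) <= (INR (fact L) * INR (fact i)) * (INR (fact L) * INR (fact j))).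
    { assert (1 * (INR (fact i) * INR (fact j)) <= INR (fact L) * (INR (fact i) * INR (fact j))).
      apply Rmult_le_compat_r; nra. nra. }
    assert (X2 : (INR (fact L) * INR (fact i)) * (INR (fact L) * INR (fact j)) <= P * Q).
    { apply Rmult_le_compat; nra. }
    assert (1 <= P) by nra. assert (1 <= Q) by nra.
    assert (P * Q <= P * P * (Q * Q)). { assert (1 * 1 <= P * Q) by (apply Rmult_le_compat; lra). replace (P * P * (Q * Q)) with ((P * Q) * (P * Q)) by ring. nra. } lra. }
  assert (EaN : a ^ N = (a ^ 2) ^ L * a ^ i * a ^ j).
  { rewrite <- pow_mult, <- !pow_add. f_equal. }
  assert (S4 : 2 * MA * MB * a ^ N / (P * P * (Q * Q)) <= 2 * MA * MB * a ^ N / (INR (fact L) * INR (fact i) * INR (fact j))).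
  { unfold Rdiv. apply Rmult_le_compat_l. apply Rmult_le_pos; auto. apply Rmult_le_pos; lra.
    apply Rinv_le_contravar; auto. apply Rmult_lt_0_compat. nra. lra. }
  rewrite <- S2 in S4.
  replace (2 * MA * MB * ((a ^ 2) ^ L / INR (fact L) * (a ^ i / INR (fact i) * (a ^ j / INR (fact j)))))
    with (2 * MA * MB * a ^ N / (INR (fact L) * INR (fact i) * INR (fact j))) by (rewrite EaN; field; repeat split; lra).
  lra.
Qed.

Definition cu MA L := 4 ^ L * INR (fact L) / INR (fact (2 * L)) * MA * 2 ^ L.

Lemma ph_bound L i : 0 <= ph L i <= 4 ^ L * INR (fact (L + i)) * INR (fact L) / INR (fact (2 * L)).
Proof.
  unfold ph. pose proof (fact2_le (L + i)). pose proof (INR_fact_lt_0 (L+i)). pose proof (INR_fact_lt_0 L).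
  pose proof (INR_fact_lt_0 (2*L)). pose proof (INR_fact_lt_0 (2*(L+i))). assert (0 < 4 ^ i) by (apply pow_lt; lra).
  assert (0 < 4 ^ L) by (apply pow_lt; lra).
  split. apply Rdiv_le_0_compat. nra. apply Rmult_lt_0_compat. nra. lra.
  rewrite pow_add in H.
  apply Rmult_le_reg_r with (INR (fact (2 * L)) * INR (fact (L + i)) * 4 ^ i). apply Rmult_lt_0_compat. nra. lra.
  replace (INR (fact (2 * (L + i))) * INR (fact L) / (INR (fact (2 * L)) * INR (fact (L + i)) * 4 ^ i) *
    (INR (fact (2 * L)) * INR (fact (L + i)) * 4 ^ i)) with (INR (fact (2 * (L + i))) * INR (fact L)) by (field; repeat split; lra).
  replace (4 ^ L * INR (fact (L + i)) * INR (fact L) / INR (fact (2 * L)) * (INR (fact (2 * L)) * INR (fact (L + i)) * 4 ^ i))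
    with (4 ^ L * 4 ^ i * INR (fact (L + i)) ^ 2 * INR (fact L)) by (field; lra).
  apply Rmult_le_compat_r; lra.
Qed.

Lemma uT_bound k mu MA L i : 0 <= MA -> (forall p, Cmod (Aa mu p) <= MA * 2 ^ p / INR (fact p)) ->
  Cmod (uT k mu L i) <= cu MA L * ((Cmod (xx k) / 2) ^ i / INR (fact i)).
Proof.
  intros HMA HA. rewrite uT_nf. rewrite !Cmod_mult, Cmod_pow, Cmod_Copp, Cmod_R.
  set (a := Cmod (xx k)). assert (Ha : 0 <= a) by apply Cmod_ge_0.
  pose proof (ph_bound L i) as [P0 P1]. specialize (HA (L+i)%nat).
  pose proof (INR_fact_lt_0 (L+i)). pose proof (INR_fact_lt_0 L). pose proof (INR_fact_lt_0 (2*L)).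
  pose proof (INR_fact_lt_0 (2*L+i)). pose proof (INR_fact_lt_0 i). pose proof (fact_ge1 (2*L+i)).
  assert (0 < 4 ^ i) by (apply pow_lt; lra). assert (0 < 2 ^ i) by (apply pow_lt; lra).
  assert (0 < 4 ^ L) by (apply pow_lt; lra). assert (0 < 2 ^ L) by (apply pow_lt; lra).
  assert (Hru : 0 <= ru L i) by (unfold ru; apply Rmult_le_pos; [apply Rmult_le_pos; [apply Rmult_le_pos; auto|]|]; left; apply Rinv_0_lt_compat; lra).
  rewrite Rabs_pos_eq by auto.
  assert (0 <= a ^ i) by (apply pow_le; auto). pose proof (Cmod_ge_0 (Aa mu (L + i))).
  assert (S1 : a ^ i * (ru L i * Cmod (Aa mu (L + i))) <=
     a ^ i * ((4 ^ L * INR (fact (L + i)) * INR (fact L) / INR (fact (2 * L))) * / INR (fact (2*L+i)) * / INR (fact i) * / 4 ^ i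
              * (MA * 2 ^ (L + i) / INR (fact (L + i))))).
  { apply Rmult_le_compat_l; auto. apply Rmult_le_compat; auto. unfold ru.
    repeat apply Rmult_le_compat_r; try (left; apply Rinv_0_lt_compat; lra). auto. }
  eapply Rle_trans. exact S1.
  rewrite pow_add. unfold cu.
  replace (4 ^ i) with (2 ^ i * 2 ^ i) by (rewrite <- Rpow_mult_distr; f_equal; ring).
  replace ((a / 2) ^ i) with (a ^ i / 2 ^ i) by (unfold Rdiv; rewrite Rpow_mult_distr, pow_inv; auto).
  set (c := 4 ^ L * INR (fact L) / INR (fact (2 * L)) * MA * 2 ^ L).
  assert (0 <= c). { unfold c. assert (0 < / INR (fact (2*L))) by (apply Rinv_0_lt_compat; lra). unfold Rdiv. repeat apply Rmult_le_pos; lra. }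
  replace (a ^ i * (4 ^ L * INR (fact (L + i)) * INR (fact L) / INR (fact (2 * L)) * / INR (fact (2 * L + i)) *
     / INR (fact i) * / (2 ^ i * 2 ^ i) * (MA * (2 ^ L * 2 ^ i) / INR (fact (L + i)))))
    with (c * (a ^ i / 2 ^ i / INR (fact i)) * / INR (fact (2 * L + i))) by (unfold c; field; repeat split; lra).
  assert (0 <= c * (a ^ i / 2 ^ i / INR (fact i))).
  { apply Rmult_le_pos; auto. repeat apply Rdiv_le_0_compat; lra. }
  assert (/ INR (fact (2 * L + i)) <= 1). { rewrite <- Rinv_1. apply Rinv_le_contravar; lra. }
  nra.
Qed.

Lemma vT_bound k mu MB L j : 0 <= MB -> (forall q, Cmod (Bb mu q) <= MB * 2 ^ q / INR (fact q)) ->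
  Cmod (vT k mu L j) <= cu MB L * ((Cmod (xx k) / 2) ^ j / INR (fact j)).
Proof.
  intros HMB HB. rewrite vT_nf. rewrite !Cmod_mult, Cmod_pow, Cmod_Copp, Cmod_R.
  set (a := Cmod (xx k)). assert (Ha : 0 <= a) by apply Cmod_ge_0.
  pose proof (ph_bound L j) as [P0 P1]. specialize (HB (L+j)%nat).
  pose proof (INR_fact_lt_0 (L+j)). pose proof (INR_fact_lt_0 L). pose proof (INR_fact_lt_0 (2*L)).
  pose proof (INR_fact_lt_0 (2*L+j)). pose proof (INR_fact_lt_0 j). pose proof (fact_ge1 (2*L+j)).
  assert (0 < 4 ^ j) by (apply pow_lt; lra). assert (0 < 2 ^ j) by (apply pow_lt; lra).
  assert (0 < 4 ^ L) by (apply pow_lt; lra). assert (0 < 2 ^ L) by (apply pow_lt; lra).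
  assert (Hru : 0 <= ru L j) by (unfold ru; apply Rmult_le_pos; [apply Rmult_le_pos; [apply Rmult_le_pos; auto|]|]; left; apply Rinv_0_lt_compat; lra).
  rewrite Rabs_pos_eq by auto.
  assert (0 <= a ^ j) by (apply pow_le; auto). pose proof (Cmod_ge_0 (Bb mu (L + j))).
  assert (S1 : a ^ j * (ru L j * Cmod (Bb mu (L + j))) <=
     a ^ j * ((4 ^ L * INR (fact (L + j)) * INR (fact L) / INR (fact (2 * L))) * / INR (fact (2*L+j)) * / INR (fact j) * / 4 ^ j
              * (MB * 2 ^ (L + j) / INR (fact (L + j))))).
  { apply Rmult_le_compat_l; auto. apply Rmult_le_compat; auto. unfold ru.
    repeat apply Rmult_le_compat_r; try (left; apply Rinv_0_lt_compat; lra). auto. }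
  eapply Rle_trans. exact S1.
  rewrite pow_add. unfold cu.
  replace (4 ^ j) with (2 ^ j * 2 ^ j) by (rewrite <- Rpow_mult_distr; f_equal; ring).
  replace ((a / 2) ^ j) with (a ^ j / 2 ^ j) by (unfold Rdiv; rewrite Rpow_mult_distr, pow_inv; auto).
  set (c := 4 ^ L * INR (fact L) / INR (fact (2 * L)) * MB * 2 ^ L).
  assert (0 <= c). { unfold c. assert (0 < / INR (fact (2*L))) by (apply Rinv_0_lt_compat; lra). unfold Rdiv. repeat apply Rmult_le_pos; lra. }
  replace (a ^ j * (4 ^ L * INR (fact (L + j)) * INR (fact L) / INR (fact (2 * L)) * / INR (fact (2 * L + j)) *
     / INR (fact j) * / (2 ^ j * 2 ^ j) * (MB * (2 ^ L * 2 ^ j) / INR (fact (L + j)))))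
    with (c * (a ^ j / 2 ^ j / INR (fact j)) * / INR (fact (2 * L + j))) by (unfold c; field; repeat split; lra).
  assert (0 <= c * (a ^ j / 2 ^ j / INR (fact j))).
  { apply Rmult_le_pos; auto. repeat apply Rdiv_le_0_compat; lra. }
  assert (/ INR (fact (2 * L + j)) <= 1). { rewrite <- Rinv_1. apply Rinv_le_contravar; lra. }
  nra.
Qed.

Lemma tT_bound k mu MA MB N : 0 <= MA -> 0 <= MB ->
  (forall p, Cmod (Aa mu p) <= MA * 2 ^ p / INR (fact p)) ->
  (forall q, Cmod (Bb mu q) <= MB * 2 ^ q / INR (fact q)) ->
  Cmod (tT k mu N) <= MA * MB * ((4 * Cmod (xx k)) ^ N / INR (fact N)).
Proof.
  intros HMA HMB HA HB. rewrite tT_nf, t_id. rewrite !Cmod_mult, Cmod_pow, Cmod_Copp, Cmod_R.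
  set (a := Cmod (xx k)). assert (Ha : 0 <= a) by apply Cmod_ge_0.
  assert (Ht : 0 <= tau N <= 1).
  { unfold tau. pose proof (binom_le_pow (2*N) N). pose proof (binom_nonneg (2*N) N).
    assert (0 < 16 ^ N) by (apply pow_lt; lra).
    split. apply Rdiv_le_0_compat; auto. apply pow_le; auto.
    assert ((2 ^ (2 * N)) ^ 2 = 16 ^ N). { rewrite <- pow_mult. replace 16 with (2 ^ 4) by ring. rewrite <- pow_mult. f_equal. lia. }
    apply Rmult_le_reg_r with (16 ^ N); auto. unfold Rdiv. rewrite Rmult_assoc, Rinv_l by lra.
    rewrite Rmult_1_r, Rmult_1_l. rewrite <- H2. apply pow_incr. lra. }
  rewrite Rabs_pos_eq by lra. specialize (HA N). specialize (HB N).
  pose proof (Cmod_ge_0 (Aa mu N)). pose proof (Cmod_ge_0 (Bb mu N)). pose proof (INR_fact_lt_0 N). pose proof (fact_ge1 N).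
  assert (0 <= a ^ N) by (apply pow_le; auto). assert (0 < 2 ^ N) by (apply pow_lt; lra).
  assert (S1 : a ^ N * (tau N * (Cmod (Aa mu N) * Cmod (Bb mu N))) <= a ^ N * (1 * ((MA * 2 ^ N / INR (fact N)) * (MB * 2 ^ N / INR (fact N))))).
  { apply Rmult_le_compat_l; auto. apply Rmult_le_compat; try lra. apply Rmult_le_pos; auto. apply Rmult_le_compat; auto. }
  eapply Rle_trans. exact S1.
  rewrite Rpow_mult_distr. replace (4 ^ N) with (2 ^ N * 2 ^ N) by (rewrite <- Rpow_mult_distr; f_equal; ring).
  replace (a ^ N * (1 * (MA * 2 ^ N / INR (fact N) * (MB * 2 ^ N / INR (fact N)))))
    with (MA * MB * (2 ^ N * 2 ^ N * a ^ N / INR (fact N)) * / INR (fact N)) by (field; lra).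
  assert (0 <= MA * MB * (2 ^ N * 2 ^ N * a ^ N / INR (fact N))).
  { apply Rmult_le_pos. nra. apply Rdiv_le_0_compat; nra. }
  assert (/ INR (fact N) <= 1). { rewrite <- Rinv_1. apply Rinv_le_contravar; lra. }
  replace (MA * MB * (2 ^ N * 2 ^ N * a ^ N / INR (fact N))) with (MA * MB * (2 ^ N * 2 ^ N * a ^ N / INR (fact N))) by auto.
  nra.
Qed.

Lemma Ccv_csum (g : nat -> nat -> C) (l : nat -> C) M :
  (forall L, (L < M)%nat -> Ccv (g L) (l L)) -> Ccv (fun I => csum (fun L => g L I) M) (csum l M).
Proof.
  induction M; intros H. simpl. apply Ccv_const.
  simpl. apply Ccv_plus. apply IHM. intros; apply H; lia. apply H; lia.
Qed.

Lemma Ccv_le_lim u l c B I0 : Ccv u l -> (forall I, (I0 <= I)%nat -> Cmod (Cminus (u I) c) <= B) -> Cmod (Cminus l c) <= B.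
Proof.
  intros Hu HB. apply Rnot_lt_le. intros Hlt.
  destruct (Hu (Cmod (Cminus l c) - B)) as [N HN]. lra.
  specialize (HN (N + I0)%nat ltac:(lia)). specialize (HB (N + I0)%nat ltac:(lia)).
  pose proof (Cmod_tri3 l (u (N + I0)%nat) c). rewrite Cmod_sub_sym in HN. lra.
Qed.

Lemma pow4_ge n : INR n + 1 <= 4 ^ n.
Proof. induction n. simpl. lra. rewrite S_INR. simpl. pose proof (pos_INR n). lra. Qed.

Lemma quarter_small K : 0 <= K -> forall eps, 0 < eps -> exists M0, forall M, (M0 <= M)%nat -> (/ 4) ^ M * K < eps.
Proof.
  intros HK eps He. destruct (inv_small K eps He) as [M0 HM0]. exists M0. intros M HM.
  specialize (HM0 M HM). pose proof (pow4_ge M). pose proof (pos_INR M).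
  rewrite pow_inv. eapply Rle_lt_trans; [|exact HM0].
  unfold Rdiv. rewrite Rmult_comm. apply Rmult_le_compat_l; auto. apply Rinv_le_contravar; lra.
Qed.

Lemma csum_trunc (g : nat -> C) M I : (M <= I)%nat -> csum g M = csum (fun L => if (L <? M)%nat then g L else RtoC 0) I.
Proof.
  intros H. rewrite (csum_extend _ M I); auto.
  apply csum_ext. intros L HL. destruct (Nat.ltb_spec L M); auto; lia.
  intros i Hi. destruct (Nat.ltb_spec i M); auto; lia.
Qed.

Lemma Cmod_csum3 (d : nat -> nat -> nat -> C) I :
  Cmod (csum (fun L => csum (fun i => csum (fun j => d L i j) I) I) I) <=
  rsum (fun L => rsum (fun i => rsum (fun j => Cmod (d L i j)) I) I) I.
Proof.
  eapply Rle_trans. apply Cmod_csum. apply rsum_le. intros L _.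
  eapply Rle_trans. apply Cmod_csum. apply rsum_le. intros i _. apply Cmod_csum.
Qed.

Lemma rsum_le3 (f g : nat -> nat -> nat -> R) I :
  (forall L i j, f L i j <= g L i j) ->
  rsum (fun L => rsum (fun i => rsum (fun j => f L i j) I) I) I <= rsum (fun L => rsum (fun i => rsum (fun j => g L i j) I) I) I.
Proof. intros H. apply rsum_le. intros. apply rsum_le. intros. apply rsum_le. intros. auto. Qed.

Lemma rsum_fact3 c (x y z : nat -> R) I :
  rsum (fun L => rsum (fun i => rsum (fun j => c * (x L * (y i * z j))) I) I) I = c * (rsum x I * (rsum y I * rsum z I)).
Proof.
  transitivity (rsum (fun L => rsum (fun i => (c * x L * y i) * rsum z I) I) I).
  { apply rsum_ext. intros L _. apply rsum_ext. intros i _. rewrite <- rsum_scal. apply rsum_ext. intros. ring. }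
  transitivity (rsum (fun L => (c * x L * rsum z I) * rsum y I) I).
  { apply rsum_ext. intros L _. rewrite <- rsum_scal. apply rsum_ext. intros. ring. }
  transitivity ((c * rsum z I * rsum y I) * rsum x I).
  { rewrite <- rsum_scal. apply rsum_ext. intros. ring. }
  ring.
Qed.

Lemma box_bound k mu MA MB M I : 0 <= MA -> 0 <= MB ->
  (forall p, Cmod (Aa mu p) <= MA * 2 ^ p / INR (fact p)) ->
  (forall q, Cmod (Bb mu q) <= MB * 2 ^ q / INR (fact q)) ->
  (2 * M <= I)%nat ->
  Cmod (Cminus (csum (fun L => csum (fun i => csum (fun j => Wt k mu L i j) I) I) M) (csum (tT k mu) (2 * M)))
  <= (/ 4) ^ M * (2 * MA * MB * (exp (Cmod (xx k) ^ 2) * (exp (Cmod (xx k)) * exp (Cmod (xx k))))).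
Proof.
  intros HMA HMB HA HB HI.
  set (a := Cmod (xx k)). assert (Ha : 0 <= a) by apply Cmod_ge_0.
  rewrite (csum_trunc _ M I) by lia.
  assert (ET : csum (tT k mu) (2 * M) = csum (fun L => csum (fun i => csum (fun j =>
            if (2*L+i+j <? 2*M)%nat then Wt k mu L i j else RtoC 0) I) I) I).
  { rewrite (csum_ext (tT k mu) (fun N => csum (fun L => csum (fun i => csum (fun j =>
        if (2*L+i+j =? N)%nat then Wt k mu L i j else RtoC 0) I) I) I)).
    2:{ intros N HN. symmetry. apply perN. lia. }
    rewrite csum_swap. apply csum_ext; intros L _. rewrite csum_swap. apply csum_ext; intros i _.
    rewrite csum_swap. apply csum_ext; intros j _. apply csum_ind_lt. }
  rewrite ET.
  rewrite (csum_ext (fun L => if (L <? M)%nat then csum (fun i => csum (fun j => Wt k mu L i j) I) I else RtoC 0)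
     (fun L => csum (fun i => csum (fun j => if (L <? M)%nat then Wt k mu L i j else RtoC 0) I) I)).
  2:{ intros L _. destruct (L <? M)%nat; auto. rewrite (csum_ext _ (fun _ => RtoC 0)). rewrite csum_zero. auto.
      intros. apply csum_zero. }
  rewrite <- csum_minus.
  rewrite (csum_ext _ (fun L => csum (fun i => csum (fun j =>
     Cminus (if (L <? M)%nat then Wt k mu L i j else RtoC 0) (if (2*L+i+j <? 2*M)%nat then Wt k mu L i j else RtoC 0)) I) I)).
  2:{ intros L _. rewrite <- csum_minus. apply csum_ext. intros i _. rewrite <- csum_minus. auto. }
  eapply Rle_trans. apply Cmod_csum3.
  eapply Rle_trans. apply (rsum_le3 _ (fun L i j => ((/ 4) ^ M * (2 * MA * MB)) *
      ((a ^ 2) ^ L / INR (fact L) * (a ^ i / INR (fact i) * (a ^ j / INR (fact j)))))).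
  { intros L i j. pose proof (Wt_bound k mu MA MB L i j HMA HMB HA HB) as HW. fold a in HW.
    pose proof (Cmod_ge_0 (Wt k mu L i j)). assert (H2 : 0 < 2 ^ (2*L+i+j)) by (apply pow_lt; lra).
    assert (H4 : 0 < (/ 4) ^ M) by (apply pow_lt; lra).
    assert (Hn : 0 <= 2 ^ (2*L+i+j) * Cmod (Wt k mu L i j)) by nra.
    destruct (Nat.ltb_spec L M), (Nat.ltb_spec (2*L+i+j) (2*M)).
    - replace (Cminus (Wt k mu L i j) (Wt k mu L i j)) with (RtoC 0) by ring. rewrite Cmod_0. nra.
    - replace (Cminus (Wt k mu L i j) (RtoC 0)) with (Wt k mu L i j) by ring.
      assert (Hq : 1 <= (/ 4) ^ M * 2 ^ (2*L+i+j)).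
      { rewrite pow_inv. assert (4 ^ M <= 2 ^ (2*L+i+j)).
        { replace (4 ^ M) with (2 ^ (2 * M)) by (rewrite pow_mult; f_equal; ring). apply Rle_pow. lra. lia. }
        assert (0 < 4 ^ M) by (apply pow_lt; lra).
        apply Rmult_le_reg_l with (4 ^ M); auto. rewrite <- Rmult_assoc, Rinv_r by lra. lra. }
      apply Rle_trans with ((/ 4) ^ M * 2 ^ (2*L+i+j) * Cmod (Wt k mu L i j)). nra.
      rewrite Rmult_assoc. replace ((/ 4) ^ M * (2 * MA * MB) * ((a ^ 2) ^ L / INR (fact L) * (a ^ i / INR (fact i) * (a ^ j / INR (fact j)))))
        with ((/ 4) ^ M * (2 * MA * MB * ((a ^ 2) ^ L / INR (fact L) * (a ^ i / INR (fact i) * (a ^ j / INR (fact j)))))) by ring.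
      apply Rmult_le_compat_l; lra.
    - lia.
    - replace (Cminus (RtoC 0) (RtoC 0)) with (RtoC 0) by ring. rewrite Cmod_0. nra. }
  rewrite (rsum_fact3 ((/ 4) ^ M * (2 * MA * MB)) (fun L => (a ^ 2) ^ L / INR (fact L)) (fun i => a ^ i / INR (fact i)) (fun j => a ^ j / INR (fact j))).
  pose proof (rsum_exp (a ^ 2) I ltac:(apply pow_le; auto)). pose proof (rsum_exp a I Ha).
  assert (0 <= rsum (fun L => (a ^ 2) ^ L / INR (fact L)) I).
  { apply rsum_nonneg. intros. apply Rdiv_le_0_compat. apply pow_le, pow_le; auto. apply INR_fact_lt_0. }
  assert (0 <= rsum (fun L => a ^ L / INR (fact L)) I).
  { apply rsum_nonneg. intros. apply Rdiv_le_0_compat. apply pow_le; auto. apply INR_fact_lt_0. }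
  assert (H4 : 0 < (/ 4) ^ M) by (apply pow_lt; lra).
  rewrite Rmult_assoc. apply Rmult_le_compat_l. lra.
  apply Rmult_le_compat_l. nra.
  apply Rmult_le_compat; auto. apply Rmult_le_pos; auto.
  apply Rmult_le_compat; auto.
Qed.

Theorem my_main k mu :
  is_series (fun L => Cmult (Dc k L) (Cmult (CSeries (uT k mu L)) (CSeries (vT k mu L)))) (CSeries (tT k mu)).
Proof.
  destruct (rgamma_bound (Cplus mu (RtoC 1))) as [MA [HMA HA]].
  destruct (rgamma_bound (Cminus (RtoC 1) mu)) as [MB [HMB HB]].
  change (forall p, Cmod (Aa mu p) <= MA * 2 ^ p / INR (fact p)) in HA.
  change (forall q, Cmod (Bb mu q) <= MB * 2 ^ q / INR (fact q)) in HB.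
  set (a := Cmod (xx k)). assert (Ha : 0 <= a) by apply Cmod_ge_0.
  assert (Hcu : forall M0 L, 0 <= M0 -> 0 <= cu M0 L).
  { intros M0 L HM0. unfold cu. pose proof (INR_fact_lt_0 (2*L)). pose proof (INR_fact_lt_0 L).
    assert (0 < / INR (fact (2*L))) by (apply Rinv_0_lt_compat; lra).
    assert (0 < 4 ^ L) by (apply pow_lt; lra). assert (0 < 2 ^ L) by (apply pow_lt; lra).
    unfold Rdiv. repeat apply Rmult_le_pos; lra. }
  assert (HU : forall L, Ccv (fun n => csum (uT k mu L) n) (CSeries (uT k mu L))).
  { intros L. apply (conv_exp _ (cu MA L) (a / 2)). auto. lra. intros. apply uT_bound; auto. }
  assert (HV : forall L, Ccv (fun n => csum (vT k mu L) n) (CSeries (vT k mu L))).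
  { intros L. apply (conv_exp _ (cu MB L) (a / 2)). auto. lra. intros. apply vT_bound; auto. }
  assert (HT : Ccv (fun n => csum (tT k mu) n) (CSeries (tT k mu))).
  { apply (conv_exp _ (MA * MB) (4 * a)). nra. lra. intros. apply tT_bound; auto. }
  set (f := fun L => Cmult (Dc k L) (Cmult (CSeries (uT k mu L)) (CSeries (vT k mu L)))).
  assert (Hbox : forall L, Ccv (fun I => csum (fun i => csum (fun j => Wt k mu L i j) I) I) (f L)).
  { intros L. eapply Ccv_ext; [| apply (Ccv_scal (Dc k L) _ _ (Ccv_mult _ _ _ _ (HU L) (HV L)))].
    exists 0%nat. intros I _. rewrite csum_mult, <- csum_scal. apply csum_ext. intros i _.
    rewrite <- csum_scal. apply csum_ext. intros j _. reflexivity. }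
  set (K := 2 * MA * MB * (exp (a ^ 2) * (exp a * exp a))).
  assert (HK : 0 <= K). { unfold K. pose proof (exp_pos (a^2)). pose proof (exp_pos a). 
    apply Rmult_le_pos. nra. apply Rmult_le_pos; try lra. apply Rmult_le_pos; lra. }
  assert (HSM : forall M, Cmod (Cminus (csum f M) (csum (tT k mu) (2 * M))) <= (/ 4) ^ M * K).
  { intros M. apply (Ccv_le_lim (fun I => csum (fun L => csum (fun i => csum (fun j => Wt k mu L i j) I) I) M) _ _ _ (2 * M)).
    apply Ccv_csum. intros. apply Hbox.
    intros I HI. apply box_bound; auto. }
  apply Ccv_is_series.
  intros eps He.
  destruct (quarter_small K HK (eps / 2)) as [M1 HM1]. lra.
  destruct (HT (eps / 2)) as [M2 HM2]. lra.
  exists (M1 + M2)%nat. intros n Hn. rewrite sum_n_csum.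
  specialize (HSM (S n)). specialize (HM1 (S n) ltac:(lia)). specialize (HM2 (2 * S n)%nat ltac:(lia)).
  pose proof (Cmod_tri3 (csum f (S n)) (csum (tT k mu) (2 * S n)) (CSeries (tT k mu))).
  fold f. lra.
Qed.

Close Scope bool_scope.

Theorem mainTheorem2 (k mu : C) :
  is_series
    (fun L : nat =>
       Cmult
         (Cdiv
            (Cmult (Cmult (Cmult (pow_n (RtoC (-1)) (2 * L)) (pow_n k (4 * L)))
                          (RtoC (INR (Factorial.fact (2 * L)) ^ 2)))
                   (RtoC (/ 2 ^ (8 * L) * (2 - deltaL0 L))))
            (RtoC (INR (Factorial.fact L) ^ 2)))
         (Cmult
            (hyp_reg [Cplus (RtoC (INR L)) (RtoC (1/2))]
                     [RtoC (INR (2 * L + 1)); Cplus (RtoC (INR L + 1)) mu]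
                     (Copp (Cdiv (Cmult k k) (RtoC 4))))
            (hyp_reg [Cplus (RtoC (INR L)) (RtoC (1/2))]
                     [RtoC (INR (2 * L + 1)); Cminus (RtoC (INR L + 1)) mu]
                     (Copp (Cdiv (Cmult k k) (RtoC 4))))))
    (hyp_reg [RtoC (1/2); RtoC (1/2)]
             [RtoC 1; Cminus (RtoC 1) mu; Cplus mu (RtoC 1)]
             (Copp (Cmult k k))).
Proof.
  exact (my_main k mu).
Qed.
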